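(* Let $i\in\mathbb{N}_0$ and let $\alpha,\beta\in\mathbb{C}$. Then $$F^{1:1;2}_{1:0;1}\left[\begin{matrix}\alpha: & \tfrac12\beta+2+i\,; & \tfrac12\beta-2-i,\ \tfrac12\alpha+1\,;\\ \beta: & -\,; & \tfrac12\alpha\,;\end{matrix}\ \tfrac12,\ \tfrac12\right] =\frac{(-1)^i\,2^{\alpha+3+i}}{\beta\,(i+1)!}\sum_{r=0}^{i}(-1)^r\binom{i}{r}\frac{\Gamma\!\left(\frac14\beta+\frac{r+1}{2}\right)}{\Gamma\!\left(\frac14\beta-i+\frac{r-1}{2}\right)}$$ and $$F^{1:1;2}_{1:0;1}\left[\begin{matrix}\alpha: & \tfrac12\beta+2-i\,; & \tfrac12\beta-2+i,\ \tfrac12\alpha+1\,;\\ \beta: & -\,; & \tfrac12\alpha\,;\end{matrix}\ \tfrac12,\ \tfrac12\right] =\frac{2^{\alpha+3-i}}{\beta}\sum_{r=0}^{i}\binom{i}{r}\frac{\Gamma\!\left(\frac14\beta+\frac{r+1}{2}\right)}{\Gamma\!\left(\frac14\beta+\frac{r-1}{2}\right)}.$$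
   Context: For $\lambda\in\mathbb{C}$ and $n\in\mathbb{N}_0$, $(\lambda)_0=1$ and $(\lambda)_n=\lambda(\lambda+1)\cdots(\lambda+n-1)$; $\Gamma$ is Euler's Gamma function and $\binom{i}{r}$ the binomial coefficient. The (generalized) Kampé de Fériet function is defined by $$F^{H:A;B}_{G:C;D}\left[\begin{matrix}(h_H): & (a_A)\,; & (b_B)\,;\\ (g_G): & (c_C)\,; & (d_D)\,;\end{matrix}\ x,\ y\right]=\sum_{m=0}^\infty\sum_{n=0}^\infty\frac{\prod_{j=1}^H(h_j)_{m+n}\prod_{j=1}^A(a_j)_m\prod_{j=1}^B(b_j)_n}{\prod_{j=1}^G(g_j)_{m+n}\prod_{j=1}^C(c_j)_m\prod_{j=1}^D(d_j)_n}\frac{x^m}{m!}\frac{y^n}{n!},$$ where a dash ''$-$'' denotes an empty list of parameters (empty products equal $1$). Parameters are tacitly assumed to be such that the double series converges, no denominator parameter is a non-positive integer, and all Gamma values appearing are finite. *)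

(* Defs.v *)
From Stdlib Require Import Reals List Arith Factorial.
From Coquelicot Require Import Coquelicot.
Open Scope C_scope.

Definition Cexp (z : C) : C :=
  (exp (Re z) * cos (Im z), exp (Re z) * sin (Im z))%R.

Definition Rcpow (a : R) (z : C) : C := Cexp (z * RtoC (ln a)).

Fixpoint poch (z : C) (n : nat) : C :=
  match n with
  | O => 1
  | S k => poch z k * (z + RtoC (INR k))
  end.

Definition poch_list (l : list C) (n : nat) : C :=
  fold_right (fun z acc => poch z n * acc) 1 l.

Fixpoint Csum (f : nat -> C) (N : nat) : C :=
  match N with
  | O => f O
  | S k => Csum f k + f (S k)
  end.

Definition Cis_lim_seq (u : nat -> C) (l : C) : Prop :=
  is_lim_seq (fun n => Re (u n)) (Re l) /\ is_lim_seq (fun n => Im (u n)) (Im l).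

(* Euler's Gamma function via the Euler-Gauss limit
   Gamma(z) = lim_n n! n^z / (z (z+1) ... (z+n)),  valid for z not in {0,-1,-2,...} *)
Definition gauss_seq (z : C) (n : nat) : C :=
  RtoC (INR (fact n)) * Rcpow (INR n) z / poch z (S n).
Definition CGamma (z : C) : C :=
  (real (Lim_seq (fun n => Re (gauss_seq z n))),
   real (Lim_seq (fun n => Im (gauss_seq z n)))).

Definition nonpos_int (z : C) : Prop := exists k : nat, z = - RtoC (INR k).

(* general term of the Kampe de Feriet double series *)
Definition kdf_term (h a b g c d : list C) (x y : C) (m n : nat) : C :=
  poch_list h (m + n) * poch_list a m * poch_list b n
  / (poch_list g (m + n) * poch_list c m * poch_list d n)
  * (x ^ m / RtoC (INR (fact m))) * (y ^ n / RtoC (INR (fact n))).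

Definition kdf_partial (h a b g c d : list C) (x y : C) (N : nat) : C :=
  Csum (fun m => Csum (fun n => kdf_term h a b g c d x y m n) N) N.

Definition binomR (i r : nat) : R := Binomial.C i r.

(* Main.v *)
Require Import Defs.
From Stdlib Require Import Reals List Arith Factorial Lra Lia.
From Coquelicot Require Import Coquelicot.
Import ListNotations.
Open Scope C_scope.


Lemma Cexp_add : forall a b, Cexp (a + b) = Cexp a * Cexp b.
Proof.
  intros [a1 a2] [b1 b2]. unfold Cexp; simpl.
  rewrite exp_plus, cos_plus, sin_plus.
  apply injective_projections; simpl; ring.
Qed.

Lemma Cexp_RtoC : forall x : R, Cexp (RtoC x) = RtoC (exp x).
Proof.
  intros x. unfold Cexp, RtoC; simpl. rewrite cos_0, sin_0.
  apply injective_projections; simpl; ring.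
Qed.

Lemma Cexp_0 : Cexp 0 = 1.
Proof. rewrite Cexp_RtoC, exp_0. reflexivity. Qed.

Lemma Cexp_neq0 : forall z, Cexp z <> 0.
Proof.
  intros z H. assert (H2 : Cexp z * Cexp (- z) = 0) by (rewrite H; ring).
  rewrite <- Cexp_add in H2. replace (z + - z) with (RtoC 0) in H2 by ring.
  rewrite Cexp_0 in H2. apply C1_nz. exact H2.
Qed.

Lemma Cmod_Cexp : forall z, Cmod (Cexp z) = exp (Re z).
Proof.
  intros z. unfold Cmod, Cexp. cbn [fst snd].
  replace ((exp (Re z) * cos (Im z)) ^ 2 + (exp (Re z) * sin (Im z)) ^ 2)%R
    with (exp (Re z) ^ 2)%R.
  - apply sqrt_pow2. left; apply exp_pos.
  - pose proof (sin2_cos2 (Im z)) as H. unfold Rsqr in H.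
    replace ((exp (Re z) * cos (Im z)) ^ 2 + (exp (Re z) * sin (Im z)) ^ 2)%R
      with (exp (Re z) ^ 2 * (sin (Im z) * sin (Im z) + cos (Im z) * cos (Im z)))%R by ring.
    rewrite H; ring.
Qed.

Lemma Rcpow_add : forall a z w, Rcpow a (z + w) = Rcpow a z * Rcpow a w.
Proof. intros. unfold Rcpow. rewrite <- Cexp_add. f_equal. ring. Qed.

Lemma Rcpow_nat : forall a k, (0 < a)%R -> Rcpow a (RtoC (INR k)) = RtoC (a ^ k).
Proof.
  intros a k Ha. unfold Rcpow. rewrite <- RtoC_mult, Cexp_RtoC.
  f_equal. rewrite <- (Rpower_pow k a Ha). reflexivity.
Qed.

Lemma Rcpow_neq0 : forall a z, Rcpow a z <> 0.
Proof. intros; apply Cexp_neq0. Qed.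

Lemma Csum_ext_le : forall f g N, (forall k, (k <= N)%nat -> f k = g k) -> Csum f N = Csum g N.
Proof.
  intros f g N; induction N; intros H; simpl.
  - apply H; lia.
  - rewrite IHN by (intros; apply H; lia). rewrite H by lia. reflexivity.
Qed.

Lemma Csum_plus : forall f g N, Csum (fun k => f k + g k) N = Csum f N + Csum g N.
Proof. intros f g N; induction N; simpl; [reflexivity| rewrite IHN; ring]. Qed.

Lemma Csum_minus : forall f g N, Csum (fun k => f k - g k) N = Csum f N - Csum g N.
Proof. intros f g N; induction N; simpl; [reflexivity| rewrite IHN; ring]. Qed.

Lemma Csum_scal : forall c f N, Csum (fun k => c * f k) N = c * Csum f N.
Proof. intros c f N; induction N; simpl; [reflexivity| rewrite IHN; ring]. Qed.

Lemma Csum_shift : forall f N, Csum f (S N) = f O + Csum (fun k => f (S k)) N.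
Proof. intros f N; induction N; simpl in *; [reflexivity| rewrite IHN; ring]. Qed.

Lemma Csum_RtoC : forall f N, Csum (fun k => RtoC (f k)) N = RtoC (sum_f_R0 f N).
Proof. intros f N; induction N; simpl; [reflexivity| rewrite IHN, RtoC_plus; reflexivity]. Qed.

Lemma Re_Csum : forall f N, Re (Csum f N) = sum_f_R0 (fun k => Re (f k)) N.
Proof. intros f N; induction N; simpl; [reflexivity| rewrite <- IHN; reflexivity]. Qed.

Lemma Im_Csum : forall f N, Im (Csum f N) = sum_f_R0 (fun k => Im (f k)) N.
Proof. intros f N; induction N; simpl; [reflexivity| rewrite <- IHN; reflexivity]. Qed.

Lemma Csum_Cmod : forall f N, (Cmod (Csum f N) <= sum_f_R0 (fun k => Cmod (f k)) N)%R.
Proof.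
  intros f N; induction N; simpl. lra.
  eapply Rle_trans; [apply Cmod_triangle|]. lra.
Qed.

Lemma sum_f_R0_mono : forall f k N, (forall n, 0 <= f n)%R -> (k <= N)%nat ->
  (sum_f_R0 f k <= sum_f_R0 f N)%R.
Proof.
  intros f k N Hf HkN. induction HkN. lra. simpl. specialize (Hf (S m)). lra.
Qed.

Lemma sum_f_R0_nonneg : forall f N, (forall n, 0 <= f n)%R -> (0 <= sum_f_R0 f N)%R.
Proof. intros f N Hf; induction N; simpl; [apply Hf| specialize (Hf (S N)); lra]. Qed.

Lemma Csum_diff_Cmod : forall f k N, (k <= N)%nat ->
  (Cmod (Csum f N - Csum f k) <= sum_f_R0 (fun n => Cmod (f n)) N - sum_f_R0 (fun n => Cmod (f n)) k)%R.
Proof.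
  intros f k N HkN. induction HkN.
  - replace (Csum f k - Csum f k) with (RtoC 0) by ring. rewrite Cmod_0. lra.
  - simpl. replace (Csum f m + f (S m) - Csum f k) with ((Csum f m - Csum f k) + f (S m)) by ring.
    eapply Rle_trans; [apply Cmod_triangle|]. lra.
Qed.


Lemma Cmod_le_abs : forall z : C, (Cmod z <= Rabs (Re z) + Rabs (Im z))%R.
Proof.
  intros z. unfold Cmod.
  rewrite <- (sqrt_pow2 (Rabs (Re z) + Rabs (Im z))) by (pose proof (Rabs_pos (Re z)); pose proof (Rabs_pos (Im z)); lra).
  apply sqrt_le_1_alt.
  rewrite <- (pow2_abs (fst z)), <- (pow2_abs (snd z)).
  change (fst z) with (Re z). change (snd z) with (Im z).
  pose proof (Rabs_pos (Re z)); pose proof (Rabs_pos (Im z)). nra.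
Qed.

Lemma im_le_Cmod : forall c : C, (Rabs (Im c) <= Cmod c)%R.
Proof.
  intros c. eapply Rle_trans; [apply Rmax_r| apply (Rmax_Cmod c)].
Qed.

Lemma Rlim_of_abs : forall (x : nat -> R) l, is_lim_seq (fun n => Rabs (x n - l)) 0%R -> is_lim_seq x l.
Proof.
  intros x l H. apply is_lim_seq_abs_0 in H.
  apply (is_lim_seq_plus' _ (fun _ => l) 0%R l) in H; [|apply is_lim_seq_const].
  rewrite Rplus_0_l in H. eapply is_lim_seq_ext; [|exact H]. intros; simpl; ring.
Qed.

Lemma Cis_lim_Cmod : forall u l, is_lim_seq (fun n => Cmod (u n - l)) 0%R -> Cis_lim_seq u l.
Proof.
  intros u l H. split.
  - apply Rlim_of_abs.
    apply is_lim_seq_le_le with (u := fun _ => 0%R) (w := fun n => Cmod (u n - l)); auto.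
    2: apply is_lim_seq_const.
    intros n; split; [apply Rabs_pos|].
    replace (Re (u n) - Re l)%R with (Re (u n - l)) by (unfold Re, Im; simpl; ring). apply re_le_Cmod.
  - apply Rlim_of_abs.
    apply is_lim_seq_le_le with (u := fun _ => 0%R) (w := fun n => Cmod (u n - l)); auto.
    2: apply is_lim_seq_const.
    intros n; split; [apply Rabs_pos|].
    replace (Im (u n) - Im l)%R with (Im (u n - l)) by (unfold Re, Im; simpl; ring). apply im_le_Cmod.
Qed.

Lemma Cis_lim_to_Cmod : forall u l, Cis_lim_seq u l -> is_lim_seq (fun n => Cmod (u n - l)) 0%R.
Proof.
  intros u l [H1 H2].
  apply is_lim_seq_le_le with (u := fun _ => 0%R)
    (w := fun n => (Rabs (Re (u n) - Re l) + Rabs (Im (u n) - Im l))%R).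
  - intros n; split; [apply Cmod_ge_0|].
    eapply Rle_trans; [apply Cmod_le_abs|].
    replace (Re (u n - l)) with (Re (u n) - Re l)%R by (unfold Re, Im; simpl; ring).
    replace (Im (u n - l)) with (Im (u n) - Im l)%R by (unfold Re, Im; simpl; ring). lra.
  - apply is_lim_seq_const.
  - replace 0%R with (0 + 0)%R by ring.
    apply (is_lim_seq_plus' (fun n => Rabs (Re (u n) - Re l)) (fun n => Rabs (Im (u n) - Im l)) 0%R 0%R); apply (proj1 (is_lim_seq_abs_0 _)).
    + apply (is_lim_seq_minus' _ (fun _ => Re l) (Re l) (Re l)) in H1; [|apply is_lim_seq_const].
      replace (Re l - Re l)%R with 0%R in H1 by ring. exact H1.
    + apply (is_lim_seq_minus' _ (fun _ => Im l) (Im l) (Im l)) in H2; [|apply is_lim_seq_const].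
      replace (Im l - Im l)%R with 0%R in H2 by ring. exact H2.
Qed.

Lemma Cis_lim_seq_ext_loc : forall u v l, (exists N, forall n, (N <= n)%nat -> u n = v n) ->
  Cis_lim_seq u l -> Cis_lim_seq v l.
Proof.
  intros u v l [N HN] [H1 H2]. split.
  - apply (is_lim_seq_ext_loc (fun n => Re (u n))); auto.
    exists N; intros n Hn; rewrite HN; auto.
  - apply (is_lim_seq_ext_loc (fun n => Im (u n))); auto.
    exists N; intros n Hn; rewrite HN; auto.
Qed.

Lemma Cis_lim_seq_ext : forall u v l, (forall n, u n = v n) ->
  Cis_lim_seq u l -> Cis_lim_seq v l.
Proof. intros u v l H; apply Cis_lim_seq_ext_loc; exists O; auto. Qed.

Lemma Cis_lim_seq_const : forall c, Cis_lim_seq (fun _ => c) c.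
Proof. intros; split; apply is_lim_seq_const. Qed.

Lemma Cis_lim_seq_plus : forall u v a b, Cis_lim_seq u a -> Cis_lim_seq v b ->
  Cis_lim_seq (fun n => u n + v n) (a + b).
Proof.
  intros u v a b [H1 H2] [H3 H4]; split; simpl.
  - apply (is_lim_seq_plus' _ _ (Re a) (Re b)); auto.
  - apply (is_lim_seq_plus' _ _ (Im a) (Im b)); auto.
Qed.

Lemma Cis_lim_seq_minus : forall u v a b, Cis_lim_seq u a -> Cis_lim_seq v b ->
  Cis_lim_seq (fun n => u n - v n) (a - b).
Proof.
  intros u v a b [H1 H2] [H3 H4]; split; simpl.
  - apply (is_lim_seq_minus' _ _ (Re a) (Re b)); auto.
  - apply (is_lim_seq_minus' _ _ (Im a) (Im b)); auto.
Qed.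

Lemma Cis_lim_seq_mult : forall u v a b, Cis_lim_seq u a -> Cis_lim_seq v b ->
  Cis_lim_seq (fun n => u n * v n) (a * b).
Proof.
  intros u v a b [H1 H2] [H3 H4]; split; simpl.
  - apply (is_lim_seq_minus' _ _ (Re a * Re b) (Im a * Im b));
    apply is_lim_seq_mult'; auto.
  - apply (is_lim_seq_plus' _ _ (Re a * Im b) (Im a * Re b));
    apply is_lim_seq_mult'; auto.
Qed.

Lemma Cis_lim_seq_scal : forall c u a, Cis_lim_seq u a ->
  Cis_lim_seq (fun n => c * u n) (c * a).
Proof. intros; apply Cis_lim_seq_mult; auto; apply Cis_lim_seq_const. Qed.

Lemma Cis_lim_seq_incr_n : forall u N l, Cis_lim_seq (fun n => u (n + N)%nat) l -> Cis_lim_seq u l.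
Proof.
  intros u N l [H1 H2]; split.
  - apply (is_lim_seq_incr_n (fun n => Re (u n)) N); auto.
  - apply (is_lim_seq_incr_n (fun n => Im (u n)) N); auto.
Qed.

Lemma Cis_lim_seq_incr_1 : forall u l, Cis_lim_seq (fun n => u (S n)) l -> Cis_lim_seq u l.
Proof.
  intros u l H; apply (Cis_lim_seq_incr_n u 1).
  eapply Cis_lim_seq_ext; [|exact H]. intros n; simpl; replace (n + 1)%nat with (S n) by lia; reflexivity.
Qed.

Lemma Cis_lim_seq_unique : forall u a b, Cis_lim_seq u a -> Cis_lim_seq u b -> a = b.
Proof.
  intros u a b [H1 H2] [H3 H4].
  apply is_lim_seq_unique in H1, H2, H3, H4.
  rewrite H1 in H3; rewrite H2 in H4. injection H3 as H3. injection H4 as H4.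
  apply injective_projections; auto.
Qed.

Lemma is_series_lim : forall (f : nat -> R) l, is_series f l ->
  is_lim_seq (fun N => sum_f_R0 f N) l.
Proof.
  intros f l H. apply is_lim_seq_ext with (sum_n f).
  - intros n; apply sum_n_Reals.
  - exact H.
Qed.

Lemma Csum_abs_conv : forall a : nat -> C, ex_series (fun n => Cmod (a n)) ->
  exists l, Cis_lim_seq (fun N => Csum a N) l.
Proof.
  intros a H.
  assert (Hr : ex_series (fun n => Re (a n))).
  { apply (@ex_series_le R_AbsRing R_CompleteNormedModule _ (fun n => Cmod (a n))); auto.
    intros n. change (norm (Re (a n))) with (Rabs (Re (a n))). apply re_le_Cmod. }
  assert (Hi : ex_series (fun n => Im (a n))).
  { apply (@ex_series_le R_AbsRing R_CompleteNormedModule _ (fun n => Cmod (a n))); auto.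
    intros n. change (norm (Im (a n))) with (Rabs (Im (a n))). apply im_le_Cmod. }
  exists (Series (fun n => Re (a n)), Series (fun n => Im (a n))). split.
  - eapply is_lim_seq_ext; [intros n; symmetry; apply Re_Csum|].
    apply is_series_lim, Series_correct, Hr.
  - eapply is_lim_seq_ext; [intros n; symmetry; apply Im_Csum|].
    apply is_series_lim, Series_correct, Hi.
Qed.


Lemma ln_le_sub1 : forall y, (0 < y)%R -> (ln y <= y - 1)%R.
Proof.
  intros y Hy. pose proof (exp_ineq1_le (ln y)). rewrite exp_ln in H by auto. lra.
Qed.

Lemma ln_ratio_bounds : forall n : nat, (1 <= n)%nat ->
  (/ INR (S n) <= ln (INR (S n)) - ln (INR n) <= / INR n)%R.
Proof.
  intros n Hn. assert (H1 : (1 <= INR n)%R) by (apply (le_INR 1); auto).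
  rewrite S_INR. split.
  - assert (H := ln_le_sub1 (INR n / (INR n + 1))).
    rewrite ln_div in H by lra.
    assert (Hp : (0 < INR n / (INR n + 1))%R) by (apply Rdiv_lt_0_compat; lra).
    specialize (H Hp).
    replace (INR n / (INR n + 1) - 1)%R with (- / (INR n + 1))%R in H by (field; lra). lra.
  - assert (H := ln_le_sub1 ((INR n + 1) / INR n)).
    rewrite ln_div in H by lra.
    assert (Hp : (0 < (INR n + 1) / INR n)%R) by (apply Rdiv_lt_0_compat; lra).
    specialize (H Hp).
    replace ((INR n + 1) / INR n - 1)%R with (/ INR n)%R in H by (field; lra). lra.
Qed.

Lemma exp_small : forall a, (a <= /2)%R -> (0 <= exp a - 1 - a <= 2 * a ^ 2)%R.
Proof.
  intros a Ha. split.
  - pose proof (exp_ineq1_le a); lra.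
  - pose proof (exp_ineq1_le (- a)) as H.
    assert (He : (exp a * exp (- a) = 1)%R) by (rewrite <- exp_plus; replace (a + - a)%R with 0%R by ring; apply exp_0).
    assert (Hpos : (0 < exp a)%R) by apply exp_pos.
    assert (Hb : (exp a * (1 - a) <= 1)%R) by nra.
    pose proof (exp_ineq1_le a) as H0.
    assert (HX : ((exp a - 1 - a) * (1 - a) <= a ^ 2)%R) by nra.
    nra.
Qed.

Lemma exp_le_2 : forall a, (a <= /2)%R -> (exp a <= 2)%R.
Proof.
  intros a Ha. pose proof (exp_small (/2) ltac:(lra)).
  assert (exp a <= exp (/2))%R by (destruct (Req_dec a (/2)); [subst; lra| left; apply exp_increasing; lra]). nra.
Qed.

Lemma cos_small : forall b, (Rabs b <= /2)%R -> (0 <= 1 - cos b <= b ^ 2 / 2)%R.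
Proof.
  intros b Hb. pose proof PI2_1 as Hpi. split.
  - pose proof (COS_bound b); lra.
  - assert (Hb' : (- PI / 2 <= b <= PI / 2)%R) by (unfold Rabs in Hb; destruct (Rcase_abs b); lra).
    destruct Hb' as [Hb1 Hb2].
    assert (H := cos_bound b 0 Hb1 Hb2). change (2 * 0 + 1)%nat with 1%nat in H.
    assert (E : cos_approx b 1 = (1 - b ^ 2 / 2)%R) by (unfold cos_approx, cos_term; simpl; field).
    rewrite E in H. lra.
Qed.

Lemma sin_small_pos : forall b, (0 <= b <= /2)%R -> (Rabs (sin b - b) <= b ^ 2)%R.
Proof.
  intros b Hb. pose proof PI2_1 as Hpi.
  assert (H0 : (0 <= b)%R) by lra. assert (H1 : (b <= PI)%R) by lra.
  assert (H := sin_bound b 0 H0 H1).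
  change (2 * 0 + 1)%nat with 1%nat in H. change (2 * (0 + 1))%nat with 2%nat in H.
  assert (E1 : sin_approx b 1 = (b - b ^ 3 / 6)%R) by (unfold sin_approx, sin_term; simpl; field).
  assert (E2 : sin_approx b 2 = (b - b ^ 3 / 6 + b ^ 5 / 120)%R) by (unfold sin_approx, sin_term; simpl; field).
  rewrite E1, E2 in H. destruct H as [Hl Hu].
  assert (Hb2 : (b ^ 3 <= b ^ 2)%R) by nra.
  assert (Hb3 : (b ^ 5 <= 20 * b ^ 3)%R) by nra.
  apply Rabs_le. split; nra.
Qed.

Lemma sin_small : forall b, (Rabs b <= /2)%R -> (Rabs (sin b - b) <= b ^ 2)%R.
Proof.
  intros b Hb. destruct (Rle_dec 0 b).
  - apply sin_small_pos. rewrite Rabs_right in Hb by lra. lra.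
  - rewrite Rabs_left in Hb by lra.
    assert (H := sin_small_pos (- b) ltac:(lra)). rewrite sin_neg in H.
    replace (- sin b - - b)%R with (- (sin b - b))%R in H by ring.
    rewrite Rabs_Ropp in H. replace ((- b) ^ 2)%R with (b ^ 2)%R in H by ring. exact H.
Qed.

Lemma Cexp_taylor : forall w, (Cmod w <= /2)%R -> (Cmod (Cexp w - 1 - w) <= 4 * Cmod w ^ 2)%R.
Proof.
  intros w Hw.
  pose proof (re_le_Cmod w) as Ha. pose proof (im_le_Cmod w) as Hb.
  rewrite Cmod2_alt.
  set (a := Re w) in *. set (b := Im w) in *.
  assert (Ha2 : (Rabs a <= /2)%R) by lra. assert (Hb2 : (Rabs b <= /2)%R) by lra.
  assert (Hare : (a <= /2)%R) by (unfold Rabs in Ha2; destruct (Rcase_abs a); lra).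
  pose proof (exp_small a Hare) as Hexp. pose proof (exp_le_2 a Hare) as He2.
  pose proof (exp_pos a) as Hep.
  pose proof (cos_small b Hb2) as Hcos. pose proof (sin_small b Hb2) as Hsin.
  assert (HRe : Re (Cexp w - 1 - w) = (exp a * (cos b - 1) + (exp a - 1 - a))%R)
    by (unfold Cexp, a, b, Re, Im; simpl; ring).
  assert (HIm : Im (Cexp w - 1 - w) = (exp a * (sin b - b) + (exp a - 1) * b)%R)
    by (unfold Cexp, a, b, Re, Im; simpl; ring).
  eapply Rle_trans; [apply Cmod_le_abs|]. rewrite HRe, HIm.
  assert (H1 : (Rabs (exp a * (cos b - 1) + (exp a - 1 - a)) <= b ^ 2 + 2 * a ^ 2)%R).
  { eapply Rle_trans; [apply Rabs_triang|]. rewrite Rabs_mult.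
    rewrite (Rabs_right (exp a)) by lra.
    rewrite (Rabs_left1 (cos b - 1)) by lra.
    rewrite (Rabs_right (exp a - 1 - a)) by lra. nra. }
  assert (H2 : (Rabs (exp a * (sin b - b) + (exp a - 1) * b) <= 3 * b ^ 2 + a ^ 2)%R).
  { eapply Rle_trans; [apply Rabs_triang|]. rewrite !Rabs_mult.
    rewrite (Rabs_right (exp a)) by lra.
    assert (He1 : (Rabs (exp a - 1) <= 2 * Rabs a)%R).
    { apply Rabs_le. pose proof (Rabs_pos a).
      assert (a ^ 2 = Rabs a ^ 2)%R by (rewrite <- pow2_abs; reflexivity).
      unfold Rabs in *; destruct (Rcase_abs a); nra. }
    pose proof (Rabs_pos b). pose proof (Rabs_pos a). pose proof (Rabs_pos (exp a - 1)).
    pose proof (Rabs_pos (sin b - b)).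
    assert (b ^ 2 = Rabs b ^ 2)%R by (rewrite <- pow2_abs; reflexivity).
    assert (a ^ 2 = Rabs a ^ 2)%R by (rewrite <- pow2_abs; reflexivity).
    assert (HH : (Rabs (exp a - 1) * Rabs b <= 2 * Rabs a * Rabs b)%R) by nra.
    assert (HS : (exp a * Rabs (sin b - b) <= 2 * b ^ 2)%R) by nra.
    assert (HAB : (2 * Rabs a * Rabs b <= a ^ 2 + b ^ 2)%R).
    { pose proof (pow2_ge_0 (Rabs a - Rabs b)).
      rewrite <- (pow2_abs a), <- (pow2_abs b). nra. }
    lra. }
  lra.
Qed.

Fixpoint psum (f : nat -> R) (n : nat) : R :=
  match n with O => 0%R | S m => (psum f m + f m)%R end.

Lemma psum_S : forall f n, psum f (S n) = sum_f_R0 f n.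
Proof. intros f n; induction n; simpl in *. ring. rewrite <- IHn. simpl. ring. Qed.

Lemma sum_le_series : forall f l, (forall n, 0 <= f n)%R -> is_series f l ->
  forall n, (sum_f_R0 f n <= l)%R.
Proof.
  intros f l Hf Hs n. apply is_series_lim in Hs.
  assert (H := is_lim_seq_le_loc (fun _ => sum_f_R0 f n) (fun N => sum_f_R0 f N) (sum_f_R0 f n) l).
  simpl in H. apply H; [|apply is_lim_seq_const|exact Hs].
  exists n. intros N HN. apply sum_f_R0_mono; auto.
Qed.

Lemma psum_le_series : forall f l, (forall n, 0 <= f n)%R -> is_series f l ->
  forall n, (0 <= psum f n <= l)%R.
Proof.
  intros f l Hf Hs n. destruct n.
  - simpl. split; [lra|]. eapply Rle_trans; [|apply (sum_le_series f l Hf Hs 0)]. simpl; apply Hf.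
  - rewrite psum_S. split; [apply sum_f_R0_nonneg; auto|]. apply sum_le_series; auto.
Qed.

Lemma real_conv_of_diff : forall (x b : nat -> R),
  (forall n, Rabs (x (S n) - x n) <= b n)%R -> ex_series b -> exists l : R, is_lim_seq x l.
Proof.
  intros x b Hb Hs.
  set (d := fun n => (x (S n) - x n)%R).
  assert (Hd : ex_series d).
  { apply ex_series_Rabs. apply (@ex_series_le R_AbsRing R_CompleteNormedModule _ b); auto.
    intros n. change (norm (Rabs (d n))) with (Rabs (Rabs (d n))). rewrite Rabs_Rabsolu. apply Hb. }
  destruct Hd as [L HL]. apply is_series_lim in HL.
  exists (L + x O)%R. apply is_lim_seq_incr_1.
  apply (is_lim_seq_plus' _ (fun _ => x O) L (x O)) in HL; [|apply is_lim_seq_const].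
  eapply is_lim_seq_ext; [|exact HL]. intros n. simpl.
  induction n; unfold d in *; simpl in *; lra.
Qed.

Lemma one_minus_exp : forall x, (0 <= x <= /2)%R -> (exp (- (2 * x)) <= 1 - x)%R.
Proof.
  intros x Hx. pose proof (exp_ineq1_le (2 * x)) as H.
  assert (He : (exp (2 * x) * exp (- (2 * x)) = 1)%R) by (rewrite <- exp_plus; replace (2 * x + - (2 * x))%R with 0%R by ring; apply exp_0).
  pose proof (exp_pos (- (2 * x))). pose proof (exp_pos (2 * x)).
  assert (H2 : (exp (- (2 * x)) * (1 + 2 * x) <= 1)%R) by nra.
  nra.
Qed.

Lemma prod_conv : forall (u e : nat -> C),
  (forall n, u (S n) = u n * (1 + e n)) ->
  (forall n, Cmod (e n) <= /2)%R ->
  ex_series (fun n => Cmod (e n)) -> u O <> 0 ->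
  exists L : C, L <> 0 /\ Cis_lim_seq u L.
Proof.
  intros u e Hrec Hsmall [Sl HS] Hu0.
  set (f := fun n => Cmod (e n)).
  assert (Hf : forall n, (0 <= f n)%R) by (intros; apply Cmod_ge_0).
  assert (HP := psum_le_series f Sl Hf HS).
  assert (Hup : forall n, (Cmod (u n) <= Cmod (u O) * exp (psum f n))%R).
  { induction n; simpl. rewrite exp_0; lra.
    rewrite Hrec, Cmod_mult, exp_plus.
    assert (H1 : (Cmod (1 + e n) <= exp (f n))%R).
    { eapply Rle_trans; [apply Cmod_triangle|]. rewrite Cmod_1.
      pose proof (exp_ineq1_le (f n)). unfold f in *. lra. }
    pose proof (Cmod_ge_0 (u n)). pose proof (Cmod_ge_0 (1 + e n)). pose proof (exp_pos (f n)).
    pose proof (exp_pos (psum f n)). pose proof (Cmod_ge_0 (u O)).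
    apply Rle_trans with (Cmod (u O) * exp (psum f n) * exp (f n))%R; [|lra].
    apply Rmult_le_compat; auto. }
  assert (Hlow : forall n, (Cmod (u O) * exp (- (2 * psum f n)) <= Cmod (u n))%R).
  { induction n; simpl. replace (- (2 * 0))%R with 0%R by ring. rewrite exp_0; lra.
    rewrite Hrec, Cmod_mult.
    replace (- (2 * (psum f n + f n)))%R with (- (2 * psum f n) + - (2 * f n))%R by ring.
    rewrite exp_plus.
    assert (H1 : (exp (- (2 * f n)) <= Cmod (1 + e n))%R).
    { eapply Rle_trans; [apply one_minus_exp; split; [apply Hf| apply Hsmall]|].
      assert (Ht := Cmod_triangle (1 + e n) (- e n)).
      replace (1 + e n + - e n) with (RtoC 1) in Ht by ring. rewrite Cmod_1, Cmod_opp in Ht.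
      unfold f; lra. }
    pose proof (exp_pos (- (2 * f n))). pose proof (exp_pos (- (2 * psum f n))).
    pose proof (Cmod_ge_0 (u O)).
    apply Rle_trans with (Cmod (u n) * exp (- (2 * f n)))%R.
    - rewrite <- Rmult_assoc. apply Rmult_le_compat_r; lra.
    - apply Rmult_le_compat_l; [apply Cmod_ge_0| exact H1]. }
  set (M := (Cmod (u O) * exp Sl)%R).
  assert (HM : forall n, (Cmod (u n) <= M)%R).
  { intros n. eapply Rle_trans; [apply Hup|]. unfold M. apply Rmult_le_compat_l; [apply Cmod_ge_0|].
    destruct (HP n) as [_ H]. destruct H as [H|H]; [left; apply exp_increasing; auto| rewrite H; lra]. }
  set (m := (Cmod (u O) * exp (- (2 * Sl)))%R).
  assert (Hm0 : (0 < m)%R) by (unfold m; apply Rmult_lt_0_compat; [apply Cmod_gt_0; auto| apply exp_pos]).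
  assert (Hm : forall n, (m <= Cmod (u n))%R).
  { intros n. eapply Rle_trans; [|apply Hlow]. unfold m. apply Rmult_le_compat_l; [apply Cmod_ge_0|].
    destruct (HP n) as [_ H]. destruct H as [H|H]; [left; apply exp_increasing; lra| rewrite H; lra]. }
  assert (Hdiff : forall n, (Cmod (u (S n) - u n) <= M * f n)%R).
  { intros n. rewrite Hrec. replace (u n * (1 + e n) - u n) with (u n * e n) by ring.
    rewrite Cmod_mult. apply Rmult_le_compat_r; [apply Hf| apply HM]. }
  assert (HMs : ex_series (fun n => (M * f n)%R)).
  { apply (ex_series_ext (fun n => (f n * M)%R)); [intros; apply Rmult_comm|].
    apply ex_series_scal_r. exists Sl; exact HS. }
  destruct (real_conv_of_diff (fun n => Re (u n)) (fun n => (M * f n)%R)) as [lr Hr]; auto.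
  { intros n. eapply Rle_trans; [|apply Hdiff].
    replace (Re (u (S n)) - Re (u n))%R with (Re (u (S n) - u n)) by (unfold Re, Im; simpl; ring).
    apply re_le_Cmod. }
  destruct (real_conv_of_diff (fun n => Im (u n)) (fun n => (M * f n)%R)) as [li Hi]; auto.
  { intros n. eapply Rle_trans; [|apply Hdiff].
    replace (Im (u (S n)) - Im (u n))%R with (Im (u (S n) - u n)) by (unfold Re, Im; simpl; ring).
    apply im_le_Cmod. }
  exists (lr, li). split; [|split; auto].
  intros H0. assert (Hc : Cis_lim_seq u (lr, li)) by (split; auto).
  rewrite H0 in Hc. apply Cis_lim_to_Cmod in Hc.
  assert (Hle := is_lim_seq_le (fun _ => m) (fun n => Cmod (u n - 0)) m 0%R).
  simpl in Hle. assert (m <= 0)%R; [|lra].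
  apply Hle; [|apply is_lim_seq_const| exact Hc].
  intros n. replace (u n - 0) with (u n) by ring. apply Hm.
Qed.

Lemma nonpos_shift : forall w k, ~ nonpos_int w -> ~ nonpos_int (w + RtoC (INR k)).
Proof.
  intros w k Hw [m Hm]. apply Hw. exists (m + k)%nat.
  rewrite plus_INR, RtoC_plus.
  replace w with (w + RtoC (INR k) - RtoC (INR k)) by ring. rewrite Hm. ring.
Qed.

Lemma poch_neq0 : forall z n, ~ nonpos_int z -> poch z n <> 0.
Proof.
  intros z n Hz. induction n; simpl.
  - apply C1_nz.
  - apply Cmult_neq_0; auto. intros H. apply Hz. exists n.
    replace z with (z + RtoC (INR n) - RtoC (INR n)) by ring. rewrite H. ring.
Qed.

Lemma poch_S_left : forall z n, poch z (S n) = z * poch (z + 1) n.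
Proof.
  intros z n. induction n.
  - simpl. ring.
  - change (poch z (S (S n))) with (poch z (S n) * (z + RtoC (INR (S n)))).
    rewrite IHn. change (poch (z + 1) (S n)) with (poch (z + 1) n * (z + 1 + RtoC (INR n))).
    rewrite S_INR, RtoC_plus. ring.
Qed.

Lemma ex_series_inv_sq : ex_series (fun n => (/ (INR (S n)) ^ 2)%R).
Proof.
  set (f := fun n => (/ (INR (S n)) ^ 2)%R).
  assert (Hb : forall N, (sum_f_R0 f N <= 2 - / INR (S N))%R).
  { induction N.
    - unfold f; simpl. lra.
    - change (sum_f_R0 f (S N)) with (sum_f_R0 f N + f (S N))%R.
      unfold f at 2. rewrite (S_INR (S N)). rewrite S_INR in *.
      pose proof (pos_INR N).
      assert (H1 : (/ (INR N + 1 + 1) ^ 2 + / (INR N + 1 + 1) <= / (INR N + 1))%R).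
      { apply Rmult_le_reg_r with ((INR N + 1) * (INR N + 1 + 1) ^ 2)%R.
        { apply Rmult_lt_0_compat; [lra|]. apply pow_lt; lra. }
        field_simplify; try lra. }
      lra. }
  set (u := fun N => sum_f_R0 f N).
  assert (Hinc : forall N, (u N <= u (S N))%R).
  { intros N; unfold u. change (sum_f_R0 f (S N)) with (sum_f_R0 f N + f (S N))%R.
    assert (0 < f (S N))%R by (unfold f; apply Rinv_0_lt_compat, pow_lt, lt_0_INR; lia). lra. }
  assert (Hbd : forall N, (u N <= 2)%R).
  { intros N. unfold u. pose proof (Hb N). assert (0 < / INR (S N))%R by (apply Rinv_0_lt_compat, lt_0_INR; lia). lra. }
  destruct (ex_finite_lim_seq_incr u 2 Hinc Hbd) as [l Hl].
  exists l. change (is_lim_seq (sum_n f) l).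
  apply (is_lim_seq_ext u); [|exact Hl]. intros n. unfold u. rewrite sum_n_Reals. reflexivity.
Qed.

Definition gerr (z : C) (n : nat) : C :=
  RtoC (INR (S n)) * Cexp (z * RtoC (ln (INR (S n)) - ln (INR n))) / (z + RtoC (INR (S n))) - 1.

Lemma gauss_rec : forall z n, ~ nonpos_int z ->
  gauss_seq z (S n) = gauss_seq z n * (1 + gerr z n).
Proof.
  intros z n Hz. unfold gauss_seq, gerr, Rcpow.
  assert (Hp := poch_neq0 z (S n) Hz).
  assert (Hq : z + RtoC (INR (S n)) <> 0).
  { intros H. apply Hz. exists (S n). replace z with (z + RtoC (INR (S n)) - RtoC (INR (S n))) by ring.
    rewrite H. ring. }
  change (poch z (S (S n))) with (poch z (S n) * (z + RtoC (INR (S n)))).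
  change (fact (S n)) with (S n * fact n)%nat. rewrite mult_INR, RtoC_mult.
  replace (z * RtoC (ln (INR (S n)))) with (z * RtoC (ln (INR n)) + z * RtoC (ln (INR (S n)) - ln (INR n)))
    by (rewrite RtoC_minus; ring).
  rewrite Cexp_add. field. split; auto.
Qed.

Lemma gerr_bound : forall z n, (1 <= n)%nat -> (2 * Cmod z + 2 <= INR n)%R ->
  (Cmod (gerr z n) <= 2 * (Cmod z + 8 * Cmod z ^ 2) / INR n ^ 2)%R.
Proof.
  intros z n Hn Hzn.
  assert (Hn1 : (1 <= INR n)%R) by (apply (le_INR 1); auto).
  pose proof (Cmod_ge_0 z) as Hz0.
  set (t := (ln (INR (S n)) - ln (INR n))%R).
  destruct (ln_ratio_bounds n Hn) as [Ht1 Ht2]. fold t in Ht1, Ht2.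
  rewrite S_INR in Ht1.
  assert (Ht0 : (0 < t)%R) by (eapply Rlt_le_trans; [|exact Ht1]; apply Rinv_0_lt_compat; lra).
  set (w := z * RtoC t).
  assert (Hw : Cmod w = (Cmod z * t)%R) by (unfold w; rewrite Cmod_mult, Cmod_R, Rabs_right; lra).
  assert (Hwt : (Cmod z * t <= Cmod z / INR n)%R).
  { unfold Rdiv. apply Rmult_le_compat_l; auto. }
  assert (Hw2 : (Cmod w <= /2)%R).
  { rewrite Hw. eapply Rle_trans; [exact Hwt|].
    apply Rmult_le_reg_r with (INR n); [lra|]. field_simplify; lra. }
  assert (HT := Cexp_taylor w Hw2). rewrite Hw in HT.
  assert (Hq : z + RtoC (INR (S n)) <> 0).
  { intros H. assert (Cmod (RtoC (INR (S n))) <= Cmod z)%R.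
    { replace (RtoC (INR (S n))) with (- z + (z + RtoC (INR (S n)))) by ring. rewrite H.
      rewrite Cplus_0_r, Cmod_opp. lra. }
    rewrite Cmod_R, Rabs_right, S_INR in H0 by (apply Rle_ge, pos_INR). lra. }
  assert (Hden : (INR n / 2 <= Cmod (z + RtoC (INR (S n))))%R).
  { assert (Ht := Cmod_triangle (z + RtoC (INR (S n))) (- z)).
    replace (z + RtoC (INR (S n)) + - z) with (RtoC (INR (S n))) in Ht by ring.
    rewrite Cmod_R, Rabs_right, Cmod_opp in Ht by (apply Rle_ge, pos_INR). pose proof (S_INR n). lra. }
  assert (Hid : gerr z n = (RtoC (INR (S n)) * (Cexp w - 1 - w) + z * RtoC (INR (S n) * t - 1)) / (z + RtoC (INR (S n)))).
  { unfold gerr. fold t. fold w. unfold w. rewrite RtoC_minus, RtoC_mult. field. auto. }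
  rewrite Hid, Cmod_div by auto.
  assert (Hnum : (Cmod (RtoC (INR (S n)) * (Cexp w - 1 - w) + z * RtoC (INR (S n) * t - 1))
                  <= (Cmod z + 8 * Cmod z ^ 2) / INR n)%R).
  { eapply Rle_trans; [apply Cmod_triangle|]. rewrite !Cmod_mult, !Cmod_R.
    rewrite (Rabs_right (INR (S n))) by (apply Rle_ge, pos_INR).
    rewrite S_INR.
    assert (Hs : (0 <= (INR n + 1) * t - 1 <= / INR n)%R).
    { split.
      - apply Rmult_le_compat_l with (r := (INR n + 1)%R) in Ht1; [|lra].
        rewrite Rinv_r in Ht1 by lra. lra.
      - apply Rmult_le_compat_l with (r := (INR n + 1)%R) in Ht2; [|lra].
        replace ((INR n + 1) * / INR n)%R with (1 + / INR n)%R in Ht2 by (field; lra). lra. }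
    rewrite (Rabs_right ((INR n + 1) * t - 1)) by lra.
    assert (H1 : ((INR n + 1) * Cmod (Cexp w - 1 - w) <= 8 * Cmod z ^ 2 / INR n)%R).
    { eapply Rle_trans. apply Rmult_le_compat_l; [lra| exact HT].
      assert (Hct : (Cmod z * t <= Cmod z / INR n)%R) by exact Hwt.
      assert (Hct0 : (0 <= Cmod z * t)%R) by (apply Rmult_le_pos; lra).
      assert (Hsq : ((Cmod z * t) ^ 2 <= (Cmod z / INR n) ^ 2)%R) by (apply pow_incr; lra).
      apply Rle_trans with ((INR n + 1) * (4 * (Cmod z / INR n) ^ 2))%R; [apply Rmult_le_compat_l; lra|].
      apply Rmult_le_reg_r with (INR n ^ 2)%R; [apply pow_lt; lra|].
      field_simplify; try lra.
      assert (0 <= Cmod z ^ 2)%R by apply pow2_ge_0. nra. }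
    assert (H2 : (Cmod z * ((INR n + 1) * t - 1) <= Cmod z / INR n)%R).
    { unfold Rdiv. apply Rmult_le_compat_l; lra. }
    assert (E : ((Cmod z + 8 * Cmod z ^ 2) / INR n = 8 * Cmod z ^ 2 / INR n + Cmod z / INR n)%R) by (field; lra).
    rewrite E. lra. }
  apply Rle_trans with (((Cmod z + 8 * Cmod z ^ 2) / INR n) / (INR n / 2))%R.
  - unfold Rdiv at 1. apply Rmult_le_compat; auto.
    + apply Cmod_ge_0.
    + left; apply Rinv_0_lt_compat. assert (Cmod (z + RtoC (INR (S n))) > 0)%R by (apply Cmod_gt_0; auto). lra.
    + apply Rinv_le_contravar; [lra| exact Hden].
  - right. field. lra.
Qed.

Lemma gauss_neq0 : forall z n, ~ nonpos_int z -> (1 <= n)%nat -> gauss_seq z n <> 0.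
Proof.
  intros z n Hz Hn. unfold gauss_seq.
  apply Cmult_neq_0; [apply Cmult_neq_0|].
  - intros H. apply RtoC_inj in H. apply (INR_fact_neq_0 n). exact H.
  - apply Rcpow_neq0.
  - intros H. assert (H2 : poch z (S n) * / poch z (S n) = 0) by (rewrite H; ring).
    rewrite Cinv_r in H2 by (apply poch_neq0; auto). apply C1_nz; exact H2.
Qed.

Lemma gauss_conv : forall z, ~ nonpos_int z ->
  exists L : C, L <> 0 /\ Cis_lim_seq (gauss_seq z) L.
Proof.
  intros z Hz.
  set (K := (2 * (Cmod z + 8 * Cmod z ^ 2))%R).
  assert (HK : (0 <= K)%R) by (unfold K; pose proof (Cmod_ge_0 z); pose proof (pow2_ge_0 (Cmod z)); lra).
  destruct (INR_unbounded (2 * Cmod z + 2 + 2 * K)) as [N1 HN1].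
  pose proof (Cmod_ge_0 z).
  assert (HN1' : (1 <= N1)%nat) by (destruct N1; [simpl in HN1; lra| lia]).
  set (u := fun j => gauss_seq z (j + N1)).
  set (e := fun j => gerr z (j + N1)).
  assert (Hrec : forall j, u (S j) = u j * (1 + e j)).
  { intros j; unfold u, e. simpl. apply gauss_rec; auto. }
  assert (Hb : forall j, (Cmod (e j) <= K / INR (j + N1) ^ 2)%R).
  { intros j. unfold e. apply gerr_bound; [lia|].
    rewrite plus_INR. pose proof (pos_INR j). lra. }
  assert (HjN : forall j, (INR (S j) <= INR (j + N1) /\ INR N1 <= INR (j + N1))%R).
  { intros j; split; apply le_INR; lia. }
  destruct (prod_conv u e) as [L [HL0 HL]]; auto.
  - intros j. eapply Rle_trans; [apply Hb|].
    destruct (HjN j) as [_ H2].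
    assert (H3 : (1 <= INR N1)%R) by (apply (le_INR 1); auto).
    apply Rmult_le_reg_r with (INR (j + N1) ^ 2)%R; [apply pow_lt; lra|].
    unfold Rdiv. rewrite Rmult_assoc, Rinv_l by (apply pow_nonzero; lra).
    simpl. nra.
  - apply (@ex_series_le R_AbsRing R_CompleteNormedModule _ (fun j => (K * / (INR (S j)) ^ 2)%R)).
    + intros j. change (norm (Cmod (e j))) with (Rabs (Cmod (e j))). rewrite Rabs_right by (apply Rle_ge, Cmod_ge_0).
      eapply Rle_trans; [apply Hb|]. unfold Rdiv. apply Rmult_le_compat_l; auto.
      destruct (HjN j) as [H1 _]. assert (0 < INR (S j))%R by (apply lt_0_INR; lia).
      apply Rinv_le_contravar; [apply pow_lt; lra|]. apply pow_incr; lra.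
    + apply (ex_series_ext (fun j => (/ (INR (S j)) ^ 2 * K)%R)); [intros; apply Rmult_comm|].
      apply ex_series_scal_r, ex_series_inv_sq.
  - unfold u. simpl. apply gauss_neq0; auto.
  - exists L. split; auto. apply (Cis_lim_seq_incr_n _ N1). exact HL.
Qed.

Lemma CGamma_lim : forall z L, Cis_lim_seq (gauss_seq z) L -> CGamma z = L.
Proof.
  intros z L [H1 H2]. unfold CGamma.
  rewrite (is_lim_seq_unique _ _ H1), (is_lim_seq_unique _ _ H2). simpl.
  destruct L; reflexivity.
Qed.

Lemma lim_c_over_n : forall c, is_lim_seq (fun n => (c / INR n)%R) 0%R.
Proof.
  intros c. replace 0%R with (c * 0)%R by ring.
  apply (is_lim_seq_scal_l (fun n => (/ INR n)%R) c 0%R).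
  replace (Finite 0) with (Rbar_inv p_infty) by reflexivity.
  apply is_lim_seq_inv; [apply is_lim_seq_INR| discriminate].
Qed.

Lemma lim_ratio_one : forall z, Cis_lim_seq (fun n => RtoC (INR n) / (z + RtoC (INR (S n)))) 1.
Proof.
  intros z. apply Cis_lim_Cmod.
  destruct (INR_unbounded (2 * Cmod z + 2)) as [N1 HN1].
  pose proof (Cmod_ge_0 z).
  apply is_lim_seq_le_le_loc with (u := fun _ => 0%R) (w := fun n => (2 * (Cmod z + 1) / INR n)%R).
  - exists N1. intros n Hn. split; [apply Cmod_ge_0|].
    assert (HnN : (INR N1 <= INR n)%R) by (apply le_INR; lia).
    assert (Hden : (INR n / 2 <= Cmod (z + RtoC (INR (S n))))%R).
    { assert (Ht := Cmod_triangle (z + RtoC (INR (S n))) (- z)).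
      replace (z + RtoC (INR (S n)) + - z) with (RtoC (INR (S n))) in Ht by ring.
      rewrite Cmod_R, Rabs_right, Cmod_opp in Ht by (apply Rle_ge, pos_INR). pose proof (S_INR n). lra. }
    assert (Hq : z + RtoC (INR (S n)) <> 0).
    { intros H0. rewrite H0, Cmod_0 in Hden. lra. }
    replace (RtoC (INR n) / (z + RtoC (INR (S n))) - 1) with (- (z + 1) / (z + RtoC (INR (S n)))).
    2:{ rewrite S_INR, RtoC_plus in *. field. auto. }
    rewrite Cmod_div by auto. rewrite Cmod_opp.
    assert (H1 : (Cmod (z + 1) <= Cmod z + 1)%R) by (eapply Rle_trans; [apply Cmod_triangle| rewrite Cmod_1; lra]).
    apply Rle_trans with ((Cmod z + 1) / (INR n / 2))%R.
    + unfold Rdiv. apply Rmult_le_compat; auto. apply Cmod_ge_0.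
      left; apply Rinv_0_lt_compat. lra.
      apply Rinv_le_contravar; lra.
    + right. field. lra.
  - apply is_lim_seq_const.
  - apply lim_c_over_n.
Qed.

Lemma Gamma_succ : forall z, ~ nonpos_int z -> CGamma (z + 1) = z * CGamma z.
Proof.
  intros z Hz. destruct (gauss_conv z Hz) as [L [_ HL]].
  rewrite (CGamma_lim z L HL).
  apply CGamma_lim.
  replace (z * L) with (z * L * 1) by ring.
  apply Cis_lim_seq_ext_loc with (u := fun n => z * gauss_seq z n * (RtoC (INR n) / (z + RtoC (INR (S n))))).
  - exists 1%nat. intros n Hn. unfold gauss_seq.
    rewrite Rcpow_add.
    assert (E1 : Rcpow (INR n) 1 = RtoC (INR n)).
    { change (RtoC 1) with (RtoC (INR 1)). rewrite Rcpow_nat by (apply lt_0_INR; lia). f_equal. ring. }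
    rewrite E1.
    assert (Hp := poch_neq0 z (S (S n)) Hz).
    rewrite poch_S_left in Hp.
    assert (Hp2 := poch_neq0 z (S n) Hz).
    assert (Hq : z + RtoC (INR (S n)) <> 0).
    { intros H. apply Hz. exists (S n). replace z with (z + RtoC (INR (S n)) - RtoC (INR (S n))) by ring.
      rewrite H. ring. }
    assert (Hz0 : z <> 0) by (intros H; apply Hz; exists O; rewrite H; simpl; ring).
    assert (Hp3 : poch (z + 1) (S n) <> 0) by (intros H; apply Hp; rewrite H; ring).
    assert (E2 : poch (z + 1) (S n) = poch (z + 1) n * (z + RtoC (INR (S n)))).
    { change (poch (z + 1) (S n)) with (poch (z + 1) n * (z + 1 + RtoC (INR n))).
      rewrite S_INR, RtoC_plus. ring. }
    assert (E3 : poch z (S n) = z * poch (z + 1) n) by apply poch_S_left.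
    rewrite E2, E3. field. repeat split; auto.
    intros H. apply Hp3. rewrite E2, H. ring.
  - apply Cis_lim_seq_mult; [apply Cis_lim_seq_scal; exact HL| apply lim_ratio_one].
Qed.

Lemma Gamma_shift : forall w k, ~ nonpos_int w ->
  CGamma (w + RtoC (INR k)) = poch w k * CGamma w.
Proof.
  intros w k Hw. induction k.
  - simpl. replace (w + RtoC 0) with w by ring. ring.
  - replace (w + RtoC (INR (S k))) with ((w + RtoC (INR k)) + 1) by (rewrite S_INR, RtoC_plus; ring).
    rewrite Gamma_succ by (apply nonpos_shift; auto).
    rewrite IHk. simpl. ring.
Qed.

Lemma Gamma_neq0 : forall w, ~ nonpos_int w -> CGamma w <> 0.
Proof.
  intros w Hw. destruct (gauss_conv w Hw) as [L [HL0 HL]].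
  rewrite (CGamma_lim w L HL). exact HL0.
Qed.

Lemma Gamma_ratio : forall w k, ~ nonpos_int w ->
  CGamma (w + RtoC (INR k)) / CGamma w = poch w k.
Proof.
  intros w k Hw. rewrite Gamma_shift by auto. field. apply Gamma_neq0; auto.
Qed.


Lemma binom_rS : forall i r, (r <= i)%nat ->
  (INR (S r) * binomR (S i) (S r) = INR (S i) * binomR i r)%R.
Proof.
  intros i r Hr. unfold binomR, Binomial.C.
  replace (S i - S r)%nat with (i - r)%nat by lia.
  change (fact (S i)) with (S i * fact i)%nat. change (fact (S r)) with (S r * fact r)%nat.
  rewrite !mult_INR.
  pose proof (INR_fact_neq_0 r). pose proof (INR_fact_neq_0 (i - r)).
  assert (INR (S r) <> 0)%R by (apply not_0_INR; lia).
  field. repeat split; auto.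
Qed.

Lemma binom_alt_sum : forall i, (1 <= i)%nat ->
  sum_f_R0 (fun r => ((-1) ^ r * binomR i r)%R) i = 0%R.
Proof.
  intros i Hi. assert (H := binomial (-1) 1 i).
  replace (-1 + 1)%R with 0%R in H by ring. rewrite pow_i in H by lia.
  rewrite H. apply sum_eq. intros r Hr. rewrite pow1. unfold binomR. ring.
Qed.

Lemma binom_sum : forall i, sum_f_R0 (fun r => binomR i r) i = (2 ^ i)%R.
Proof.
  intros i. assert (H := binomial 1 1 i). replace (1 + 1)%R with 2%R in H by ring.
  rewrite H. apply sum_eq. intros r Hr. rewrite !pow1. unfold binomR. ring.
Qed.

Lemma Csum_opp : forall f N, Csum (fun k => - f k) N = - Csum f N.
Proof. intros f N; induction N; simpl; [reflexivity| rewrite IHN; ring]. Qed.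

Definition Bsum (i j : nat) (x : C) : C :=
  Csum (fun r => RtoC ((-1) ^ r * binomR i r) * poch (x + RtoC (INR r) / 2) j) i.

Lemma Brec : forall i j x, Bsum (S i) (S j) x =
  (x + RtoC (INR j)) * Bsum (S i) j x - RtoC (INR (S i)) / 2 * Bsum i j (x + /2).
Proof.
  intros i j x. unfold Bsum.
  transitivity (Csum (fun r => (x + RtoC (INR j)) * (RtoC ((-1) ^ r * binomR (S i) r) * poch (x + RtoC (INR r) / 2) j)
     + RtoC ((-1) ^ r * binomR (S i) r) * poch (x + RtoC (INR r) / 2) j * (RtoC (INR r) / 2)) (S i)).
  { apply Csum_ext_le. intros r _. change (poch (x + RtoC (INR r) / 2) (S j)) with
      (poch (x + RtoC (INR r) / 2) j * (x + RtoC (INR r) / 2 + RtoC (INR j))). ring. }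
  rewrite Csum_plus, Csum_scal. unfold Cminus. f_equal.
  rewrite Csum_shift. change (INR 0) with 0%R.
  replace (RtoC 0 / 2) with (RtoC 0) by (field).
  rewrite Cmult_0_r, Cplus_0_l.
  rewrite <- Csum_scal, <- Csum_opp.
  apply Csum_ext_le. intros r Hr.
  assert (Hb := binom_rS i r Hr).
  replace (x + RtoC (INR (S r)) / 2) with (x + / 2 + RtoC (INR r) / 2) by (rewrite S_INR, RtoC_plus; field).
  assert (E : RtoC ((-1) ^ S r * binomR (S i) (S r)) * (RtoC (INR (S r)) / 2)
            = - (RtoC (INR (S i)) / 2) * RtoC ((-1) ^ r * binomR i r)).
  { transitivity (RtoC ((-1) ^ S r * binomR (S i) (S r) * (INR (S r) / 2))).
    { rewrite !RtoC_mult, !RtoC_div by lra. reflexivity. }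
    transitivity (RtoC (- (INR (S i) / 2) * ((-1) ^ r * binomR i r))).
    2:{ rewrite !RtoC_mult, !RtoC_opp, !RtoC_div by lra. reflexivity. }
    f_equal. simpl pow. unfold Rdiv.
    replace (-1 * (-1) ^ r * binomR (S i) (S r) * (INR (S r) * / 2))%R
      with (- / 2 * (-1) ^ r * (INR (S r) * binomR (S i) (S r)))%R by ring.
    rewrite Hb. ring. }
  transitivity (RtoC ((-1) ^ S r * binomR (S i) (S r)) * (RtoC (INR (S r)) / 2) * poch (x + / 2 + RtoC (INR r) / 2) j).
  { ring. }
  rewrite E. ring.
Qed.

Lemma B_zero : forall j i x, (j < i)%nat -> Bsum i j x = 0.
Proof.
  induction j; intros i x Hji.
  - unfold Bsum. simpl poch.
    transitivity (Csum (fun r => RtoC ((-1) ^ r * binomR i r)) i).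
    { apply Csum_ext_le; intros; ring. }
    rewrite Csum_RtoC, binom_alt_sum by lia. reflexivity.
  - destruct i as [|i]; [lia|].
    rewrite Brec. rewrite (IHj (S i)) by lia. rewrite (IHj i) by lia. ring.
Qed.

Definition bcoef (i : nat) : C := RtoC ((-1) ^ i * INR (fact i) / 2 ^ i).

Lemma bcoef_S : forall i, bcoef (S i) = - (RtoC (INR (S i)) / 2) * bcoef i.
Proof.
  intros i. unfold bcoef.
  transitivity (RtoC (- (INR (S i) / 2) * ((-1) ^ i * INR (fact i) / 2 ^ i))).
  2:{ rewrite !RtoC_mult, !RtoC_opp, !RtoC_div; try lra. reflexivity. apply pow_nonzero; lra. }
  f_equal. change (fact (S i)) with (S i * fact i)%nat. rewrite mult_INR. simpl pow.
  field. apply pow_nonzero; lra.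
Qed.

Lemma B_diag : forall i x, Bsum i i x = bcoef i.
Proof.
  induction i; intros x.
  - unfold Bsum, bcoef. simpl. rewrite Cmult_1_r. f_equal.
    unfold binomR, Binomial.C. simpl. field.
  - rewrite Brec, B_zero by lia. rewrite IHi, bcoef_S. ring.
Qed.

Lemma B_next : forall i x, Bsum i (S i) x =
  bcoef i * ((RtoC (INR i) + 1) * x + 3 * RtoC (INR i) * (RtoC (INR i) + 1) / 4).
Proof.
  induction i; intros x.
  - unfold Bsum, bcoef. simpl. 
    replace (RtoC (1 * binomR 0 0)) with (RtoC 1).
    2:{ f_equal. unfold binomR, Binomial.C. simpl. field. }
    replace (RtoC (1 * 1 / 1)) with (RtoC 1) by (f_equal; field).
    field.
  - rewrite Brec, IHi, B_diag, bcoef_S. rewrite S_INR, RtoC_plus. field.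
Qed.

Lemma binom_lin_sum : forall i p q,
  Csum (fun r => RtoC (binomR i r) * (p + q * RtoC (INR r))) i
  = p * RtoC (2 ^ i) + q * RtoC (INR i) * RtoC (2 ^ i) / 2.
Proof.
  intros i p q.
  rewrite (Csum_ext_le _ (fun r => p * RtoC (binomR i r) + q * (RtoC (INR r * binomR i r))))
    by (intros; rewrite RtoC_mult; ring).
  rewrite Csum_plus, !Csum_scal, Csum_RtoC, Csum_RtoC, binom_sum.
  destruct i as [|i].
  - simpl. unfold binomR, Binomial.C. simpl. replace (0 * (1 / (1 * 1)))%R with 0%R by field. 
    replace (RtoC 0) with (RtoC 0%R) by reflexivity. field.
  - assert (H : sum_f_R0 (fun r => (INR r * binomR (S i) r)%R) (S i) = (INR (S i) * 2 ^ i)%R).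
    { rewrite decomp_sum by lia. simpl pred. rewrite Rmult_0_l, Rplus_0_l.
      rewrite (sum_eq _ (fun r => (binomR i r * INR (S i))%R)).
      - rewrite <- scal_sum, binom_sum. ring.
      - intros r Hr. rewrite binom_rS by auto. ring. }
    rewrite H. rewrite RtoC_mult. simpl pow. rewrite RtoC_mult. field.
Qed.


Lemma Cmult_cancel_l : forall c x y : C, c <> 0 -> c * x = c * y -> x = y.
Proof.
  intros c x y Hc H. replace x with (/ c * (c * x)) by (field; exact Hc).
  rewrite H. field; exact Hc.
Qed.

Lemma Csum_S : forall f N, Csum f (S N) = Csum f N + f (S N).
Proof. reflexivity. Qed.

Definition Af (n : nat) (a : C) : C := poch a n / RtoC (INR (fact n)).

Lemma fact_neq0C : forall n, RtoC (INR (fact n)) <> 0.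
Proof. intros n H. apply RtoC_inj in H. apply (INR_fact_neq_0 n); exact H. Qed.

Lemma Af_0 : forall a, Af 0 a = 1.
Proof. intros a. unfold Af. simpl. field. Qed.

Lemma Af_S : forall n a, RtoC (INR (S n)) * Af (S n) a = a * Af n (a + 1).
Proof.
  intros n a. unfold Af. rewrite poch_S_left.
  change (fact (S n)) with (S n * fact n)%nat. rewrite mult_INR, RtoC_mult.
  assert (RtoC (INR (S n)) <> 0) by (intros H; apply RtoC_inj in H; apply (not_0_INR (S n)); [lia| exact H]).
  pose proof (fact_neq0C n). field. split; auto.
Qed.

Lemma vandermonde : forall N a b,
  Csum (fun m => Af m a * Af (N - m) b) N = Af N (a + b).
Proof.
  induction N; intros a b.
  - simpl. rewrite !Af_0. ring.
  - assert (HS : RtoC (INR (S N)) <> 0) by (intros H; apply RtoC_inj in H; apply (not_0_INR (S N)); [lia| exact H]).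
    apply (Cmult_cancel_l (RtoC (INR (S N)))); auto.
    rewrite Af_S. rewrite <- Csum_scal.
    rewrite (Csum_ext_le _ (fun m => RtoC (INR m) * (Af m a * Af (S N - m) b) + RtoC (INR (S N - m)) * (Af m a * Af (S N - m) b))).
    2:{ intros m Hm. rewrite <- Cmult_plus_distr_r, <- RtoC_plus, <- plus_INR.
        replace (m + (S N - m))%nat with (S N) by lia. reflexivity. }
    rewrite Csum_plus.
    assert (P1 : Csum (fun m => RtoC (INR m) * (Af m a * Af (S N - m) b)) (S N) = a * Af N (a + 1 + b)).
    { rewrite Csum_shift. change (INR 0) with 0%R. rewrite Cmult_0_l, Cplus_0_l.
      rewrite <- IHN, <- Csum_scal. apply Csum_ext_le. intros m Hm.
      replace (S N - S m)%nat with (N - m)%nat by lia.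
      rewrite Cmult_assoc, Af_S. ring. }
    assert (P2 : Csum (fun m => RtoC (INR (S N - m)) * (Af m a * Af (S N - m) b)) (S N) = b * Af N (a + (b + 1))).
    { rewrite Csum_S. replace (S N - S N)%nat with O by lia. change (INR 0) with 0%R.
      rewrite Cmult_0_l, Cplus_0_r.
      rewrite <- IHN, <- Csum_scal. apply Csum_ext_le. intros m Hm.
      replace (S N - m)%nat with (S (N - m)) by lia.
      replace (RtoC (INR (S (N - m))) * (Af m a * Af (S (N - m)) b)) with (Af m a * (RtoC (INR (S (N - m))) * Af (S (N - m)) b)) by ring.
      rewrite Af_S. ring. }
    rewrite P1, P2. replace (a + 1 + b) with (a + b + 1) by ring. replace (a + (b + 1)) with (a + b + 1) by ring.
    ring.
Qed.

Lemma tri_diag : forall (t : nat -> nat -> C) M,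
  Csum (fun m => Csum (fun n => t m n) (M - m)%nat) M = Csum (fun N => Csum (fun m => t m (N - m)%nat) N) M.
Proof.
  intros t M. induction M.
  - reflexivity.
  - rewrite Csum_S. rewrite (Csum_S (fun N => Csum (fun m => t m (N - m)%nat) N)).
    rewrite <- IHM.
    rewrite (Csum_ext_le (fun m => Csum (fun n => t m n) (S M - m)%nat)
               (fun m => Csum (fun n => t m n) (M - m)%nat + t m (S M - m)%nat)).
    2:{ intros m Hm. replace (S M - m)%nat with (S (M - m)%nat) by lia. reflexivity. }
    rewrite Csum_plus. rewrite (Csum_S (fun m => t m (S M - m)%nat)).
    replace (S M - S M)%nat with O by lia. change (Csum (fun n => t (S M) n) 0) with (t (S M) 0%nat). ring.
Qed.

Lemma tri_diag_R : forall (t : nat -> nat -> R) M,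
  sum_f_R0 (fun m => sum_f_R0 (fun n => t m n) (M - m)%nat) M = sum_f_R0 (fun N => sum_f_R0 (fun m => t m (N - m)%nat) N) M.
Proof.
  intros t M. apply RtoC_inj.
  assert (H := tri_diag (fun m n => RtoC (t m n)) M).
  rewrite (Csum_ext_le (fun m => Csum (fun n => RtoC (t m n)) (M - m)%nat) (fun m => RtoC (sum_f_R0 (fun n => t m n) (M - m)%nat))) in H
    by (intros; apply Csum_RtoC).
  rewrite (Csum_ext_le (fun N => Csum (fun m => RtoC (t m (N - m)%nat)) N) (fun N => RtoC (sum_f_R0 (fun m => t m (N - m)%nat) N))) in H
    by (intros; apply Csum_RtoC).
  rewrite !Csum_RtoC in H. exact H.
Qed.

Lemma sq_tri : forall (t : nat -> nat -> C) (LA : R) (Sl : C),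
  is_series (fun N => sum_f_R0 (fun m => Cmod (t m (N - m)%nat)) N) LA ->
  Cis_lim_seq (fun M => Csum (fun N => Csum (fun m => t m (N - m)%nat) N) M) Sl ->
  Cis_lim_seq (fun M => Csum (fun m => Csum (fun n => t m n) M) M) Sl.
Proof.
  intros t LA Sl HA HD.
  set (a := fun N => sum_f_R0 (fun m => Cmod (t m (N - m)%nat)) N).
  assert (Ha0 : forall N, (0 <= a N)%R) by (intros; apply sum_f_R0_nonneg; intros; apply Cmod_ge_0).
  set (TriA := fun M => sum_f_R0 (fun m => sum_f_R0 (fun n => Cmod (t m n)) (M - m)%nat) M).
  assert (HTA : forall M, TriA M = sum_f_R0 a M) by (intros; unfold TriA, a; apply (tri_diag_R (fun m n => Cmod (t m n)))).
  assert (Hbound : forall M, (Cmod (Csum (fun m => Csum (fun n => t m n) M) M - Csum (fun m => Csum (fun n => t m n) (M - m)%nat) M)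
                              <= LA - TriA M)%R).
  { intros M. rewrite <- Csum_minus. eapply Rle_trans; [apply Csum_Cmod|].
    eapply Rle_trans.
    { apply sum_Rle. intros m Hm. apply (Csum_diff_Cmod (fun n => t m n) (M - m)%nat M). lia. }
    rewrite minus_sum. fold (TriA M).
    assert (HSq : (sum_f_R0 (fun m => sum_f_R0 (fun n => Cmod (t m n)) M) M <= TriA (M + M)%nat)%R).
    { unfold TriA. eapply Rle_trans.
      - apply sum_Rle with (Bn := fun m => sum_f_R0 (fun n => Cmod (t m n)) (M + M - m)%nat).
        intros m Hm. apply sum_f_R0_mono; [intros; apply Cmod_ge_0| lia].
      - apply sum_f_R0_mono; [|lia]. intros; apply sum_f_R0_nonneg; intros; apply Cmod_ge_0. }
    assert (HL : (TriA (M + M)%nat <= LA)%R) by (rewrite HTA; apply sum_le_series; auto).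
    lra. }
  apply Cis_lim_seq_ext with (u := fun M => Csum (fun N => Csum (fun m => t m (N - m)%nat) N) M +
        (Csum (fun m => Csum (fun n => t m n) M) M - Csum (fun m => Csum (fun n => t m n) (M - m)%nat) M)).
  { intros M. rewrite tri_diag. ring. }
  replace Sl with (Sl + 0) by ring. apply Cis_lim_seq_plus; auto.
  apply Cis_lim_Cmod.
  apply is_lim_seq_le_le with (u := fun _ => 0%R) (w := fun M => (LA - TriA M)%R).
  - intros M. split; [apply Cmod_ge_0|]. replace (_ - 0) with
      (Csum (fun m => Csum (fun n => t m n) M) M - Csum (fun m => Csum (fun n => t m n) (M - m)%nat) M) by ring.
    apply Hbound.
  - apply is_lim_seq_const.
  - replace 0%R with (LA - LA)%R by ring.
    apply (is_lim_seq_minus' (fun _ => LA) TriA LA LA); [apply is_lim_seq_const|].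
    eapply is_lim_seq_ext; [intros; symmetry; apply HTA|]. apply is_series_lim. exact HA.
Qed.


Lemma ratio_series : forall (g : nat -> R) (q : R) (N0 : nat),
  (0 <= q < 1)%R -> (forall n, 0 <= g n)%R ->
  (forall n, (N0 <= n)%nat -> (g (S n) <= q * g n)%R) -> ex_series g.
Proof.
  intros g q N0 Hq Hg Hr.
  assert (Hb : forall n, (g (N0 + n)%nat <= g N0 * q ^ n)%R).
  { induction n. rewrite Nat.add_0_r; simpl; lra.
    replace (N0 + S n)%nat with (S (N0 + n)) by lia.
    eapply Rle_trans; [apply Hr; lia|]. simpl.
    replace (g N0 * (q * q ^ n))%R with (q * (g N0 * q ^ n))%R by ring.
    apply Rmult_le_compat_l; lra. }
  apply (ex_series_incr_n g N0).
  apply (@ex_series_le R_AbsRing R_CompleteNormedModule _ (fun n => (q ^ n * g N0)%R)).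
  - intros n. change (norm (g (N0 + n)%nat)) with (Rabs (g (N0 + n)%nat)).
    rewrite Rabs_right by (apply Rle_ge, Hg). rewrite Rmult_comm. apply Hb.
  - apply ex_series_scal_r. apply ex_series_geom. rewrite Rabs_right; lra.
Qed.

Fixpoint rpoch (c : R) (n : nat) : R :=
  match n with O => 1%R | S k => (rpoch c k * (c + INR k))%R end.

Lemma poch_RtoC : forall c n, poch (RtoC c) n = RtoC (rpoch c n).
Proof. intros c n; induction n; simpl; [reflexivity|]. rewrite IHn, RtoC_mult, RtoC_plus. reflexivity. Qed.

Lemma rpoch_nonneg : forall c n, (0 <= c)%R -> (0 <= rpoch c n)%R.
Proof. intros c n Hc; induction n; simpl; [lra|]. apply Rmult_le_pos; auto. pose proof (pos_INR n); lra. Qed.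

Lemma Cmod_poch : forall z n, (Cmod (poch z n) <= rpoch (Cmod z) n)%R.
Proof.
  intros z n; induction n; simpl.
  - rewrite Cmod_1; lra.
  - rewrite Cmod_mult. apply Rmult_le_compat; auto; try apply Cmod_ge_0.
    eapply Rle_trans; [apply Cmod_triangle|]. rewrite Cmod_R, Rabs_right by (apply Rle_ge, pos_INR). lra.
Qed.

Lemma Cmod_Af : forall z n, (Cmod (Af n z) <= rpoch (Cmod z) n / INR (fact n))%R.
Proof.
  intros z n. unfold Af. rewrite Cmod_div by apply fact_neq0C.
  rewrite Cmod_R, Rabs_right by (apply Rle_ge, pos_INR).
  unfold Rdiv. apply Rmult_le_compat_r; [left; apply Rinv_0_lt_compat, lt_0_INR, lt_O_fact| apply Cmod_poch].
Qed.

Lemma Af_rec : forall n a, Af (S n) a * RtoC (INR (S n)) = (a + RtoC (INR n)) * Af n a.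
Proof.
  intros n a. unfold Af.
  change (poch a (S n)) with (poch a n * (a + RtoC (INR n))).
  change (fact (S n)) with (S n * fact n)%nat. rewrite mult_INR, RtoC_mult.
  assert (RtoC (INR (S n)) <> 0) by (intros H; apply RtoC_inj in H; apply (not_0_INR (S n)); [lia| exact H]).
  pose proof (fact_neq0C n). field. split; auto.
Qed.

Lemma rpoch_S_ratio : forall c n, (0 <= c)%R ->
  (rpoch c (S n) / INR (fact (S n)) = rpoch c n / INR (fact n) * ((c + INR n) / INR (S n)))%R.
Proof.
  intros c n Hc. simpl rpoch. change (fact (S n)) with (S n * fact n)%nat. rewrite mult_INR.
  pose proof (INR_fact_neq_0 n). assert (INR (S n) <> 0)%R by (apply not_0_INR; lia).
  field. split; auto.
Qed.

Lemma Af_bound_series : forall (c q : R), (0 <= c)%R -> (0 <= q < 1)%R ->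
  ex_series (fun n => (rpoch c n / INR (fact n) * q ^ n)%R).
Proof.
  intros c q Hc Hq.
  set (q' := ((1 + q) / 2)%R).
  destruct (INR_unbounded ((c * q + 1) / (q' - q))) as [N0 HN0].
  apply (ratio_series _ q' N0).
  - unfold q'; lra.
  - intros n. apply Rmult_le_pos; [|apply pow_le; lra].
    apply Rmult_le_pos; [apply rpoch_nonneg; auto| left; apply Rinv_0_lt_compat, lt_0_INR, lt_O_fact].
  - intros n Hn. rewrite rpoch_S_ratio by auto. simpl pow.
    assert (HnN : (INR N0 <= INR n)%R) by (apply le_INR; auto).
    assert (Hqq : (0 < q' - q)%R) by (unfold q'; lra).
    assert (HS : (0 < INR (S n))%R) by (apply lt_0_INR; lia).
    assert (Hr : ((c + INR n) / INR (S n) * q <= q')%R).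
    { apply Rmult_le_reg_r with (INR (S n)); auto.
      rewrite S_INR in *. field_simplify; try lra.
      assert (H1 : ((c * q + 1) <= INR n * (q' - q))%R).
      { apply Rmult_le_reg_r with (/ (q' - q))%R. apply Rinv_0_lt_compat; lra.
        rewrite Rmult_assoc, Rinv_r by lra. unfold Rdiv in HN0. lra. }
      unfold q' in *. nra. }
    set (X := (rpoch c n / INR (fact n))%R).
    assert (HX : (0 <= X)%R) by (apply Rmult_le_pos; [apply rpoch_nonneg; auto| left; apply Rinv_0_lt_compat, lt_0_INR, lt_O_fact]).
    pose proof (pow_le q n ltac:(lra)).
    replace (X * ((c + INR n) / INR (S n)) * (q * q ^ n))%R with ((X * q ^ n) * ((c + INR n) / INR (S n) * q))%R by ring.
    replace (q' * (X * q ^ n))%R with ((X * q ^ n) * q')%R by ring.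
    apply Rmult_le_compat_l; auto. apply Rmult_le_pos; auto.
Qed.

Definition ar (al : C) (n : nat) : R := Re (Af n al).
Definition ai (al : C) (n : nat) : R := Im (Af n al).

Lemma CV_disk_34 : forall al (a : nat -> R), (forall n, Rabs (a n) <= Cmod (Af n al))%R ->
  Rbar_le (3/4)%R (CV_radius a).
Proof.
  intros al a Ha. unfold CV_radius. apply (proj1 (Lub_Rbar_correct _)).
  unfold CV_disk.
  apply (@ex_series_le R_AbsRing R_CompleteNormedModule _ (fun n => (rpoch (Cmod al) n / INR (fact n) * (3/4) ^ n)%R)).
  - intros n. change (norm (Rabs (a n * (3 / 4) ^ n))) with (Rabs (Rabs (a n * (3 / 4) ^ n))).
    rewrite Rabs_Rabsolu, Rabs_mult, (Rabs_right ((3/4)^n)) by (apply Rle_ge, pow_le; lra).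
    apply Rmult_le_compat_r; [apply pow_le; lra|]. eapply Rle_trans; [apply Ha| apply Cmod_Af].
  - apply Af_bound_series; [apply Cmod_ge_0| lra].
Qed.

Lemma in_radius : forall al (a : nat -> R) x, (forall n, Rabs (a n) <= Cmod (Af n al))%R ->
  (Rabs x <= /2)%R -> Rbar_lt (Rabs x) (CV_radius a).
Proof.
  intros al a x Ha Hx. eapply Rbar_lt_le_trans; [|apply (CV_disk_34 al a Ha)]. simpl. lra.
Qed.

Lemma ar_bound : forall al n, (Rabs (ar al n) <= Cmod (Af n al))%R.
Proof. intros; apply re_le_Cmod. Qed.
Lemma ai_bound : forall al n, (Rabs (ai al n) <= Cmod (Af n al))%R.
Proof. intros; apply im_le_Cmod. Qed.

Lemma coef_r : forall al n, PS_derive (ar al) n = (Re al * ar al n - Im al * ai al n + INR n * ar al n)%R.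
Proof.
  intros al n. unfold PS_derive, ar, ai.
  assert (H := Af_rec n al). apply (f_equal Re) in H.
  rewrite re_scal_r in H. rewrite Rmult_comm, H. unfold Re, Im; simpl; ring.
Qed.

Lemma coef_i : forall al n, PS_derive (ai al) n = (Re al * ai al n + Im al * ar al n + INR n * ai al n)%R.
Proof.
  intros al n. unfold PS_derive, ar, ai.
  assert (H := Af_rec n al). apply (f_equal Im) in H.
  rewrite im_scal_r in H. rewrite Rmult_comm, H. unfold Re, Im; simpl; ring.
Qed.

Lemma ode_gen : forall (a b : nat -> R) (p q x : R),
  Rbar_lt (Rabs x) (CV_radius a) -> Rbar_lt (Rabs x) (CV_radius b) ->
  (forall n, PS_derive a n = p * a n + q * b n + INR n * a n)%R ->
  ((1 - x) * PSeries (PS_derive a) x = p * PSeries a x + q * PSeries b x)%R.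
Proof.
  intros a b p q x Ha Hb Hc.
  assert (Hd : ex_pseries (PS_derive a) x) by (apply ex_pseries_derive; auto).
  replace ((1 - x) * PSeries (PS_derive a) x)%R with
    (PSeries (PS_derive a) x - x * PSeries (PS_derive a) x)%R by ring.
  rewrite <- PSeries_incr_1.
  rewrite <- PSeries_minus; [|auto| apply ex_pseries_incr_1; auto].
  rewrite (PSeries_ext _ (PS_plus (PS_scal p a) (PS_scal q b))).
  - rewrite PSeries_plus.
    + rewrite !PSeries_scal. reflexivity.
    + apply ex_pseries_scal; [apply Rmult_comm| apply CV_radius_inside; auto].
    + apply ex_pseries_scal; [apply Rmult_comm| apply CV_radius_inside; auto].
  - intros n. unfold PS_minus, PS_plus, PS_scal, PS_incr_1.
    destruct n as [|n].
    + change (PS_derive a 0 + - 0 = p * a 0%nat + q * b 0%nat)%R. rewrite Hc. simpl. ring.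
    + change (PS_derive a (S n) + - PS_derive a n = p * a (S n) + q * b (S n))%R.
      rewrite Hc. unfold PS_derive. ring.
Qed.

Lemma pseries_lim : forall (a : nat -> R) x, ex_pseries a x ->
  is_lim_seq (fun N => sum_f_R0 (fun n => (a n * x ^ n)%R) N) (PSeries a x).
Proof.
  intros a x H. apply PSeries_correct in H. apply is_pseries_R in H. apply is_series_lim. exact H.
Qed.

Lemma half_pow : forall n, (/ 2 : C) ^ n = RtoC ((/ 2) ^ n)%R.
Proof. intros n. rewrite RtoC_pow, RtoC_inv by lra. reflexivity. Qed.

Lemma binom_half : forall al : C,
  Cis_lim_seq (fun N => Csum (fun n => Af n al * (/ 2) ^ n) N) (Rcpow 2 al).
Proof.
  intros al.
  set (p := Re al). set (q := Im al).
  set (Fr := PSeries (ar al)). set (Fi := PSeries (ai al)).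
  set (Gr := fun x => (exp (p * ln (1 - x)) * cos (q * ln (1 - x)) * Fr x - exp (p * ln (1 - x)) * sin (q * ln (1 - x)) * Fi x)%R).
  set (Gi := fun x => (exp (p * ln (1 - x)) * cos (q * ln (1 - x)) * Fi x + exp (p * ln (1 - x)) * sin (q * ln (1 - x)) * Fr x)%R).
  assert (Rr : forall c, (Rabs c <= /2)%R -> Rbar_lt (Rabs c) (CV_radius (ar al))) by (intros; eapply in_radius; [apply ar_bound| auto]).
  assert (Ri : forall c, (Rabs c <= /2)%R -> Rbar_lt (Rabs c) (CV_radius (ai al))) by (intros; eapply in_radius; [apply ai_bound| auto]).
  assert (Or : forall c, (Rabs c <= /2)%R -> ((1 - c) * PSeries (PS_derive (ar al)) c = p * Fr c + (- q) * Fi c)%R).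
  { intros c Hc. apply ode_gen; auto. intros n. rewrite coef_r. fold p q. ring. }
  assert (Oi : forall c, (Rabs c <= /2)%R -> ((1 - c) * PSeries (PS_derive (ai al)) c = p * Fi c + q * Fr c)%R).
  { intros c Hc. apply ode_gen; auto. intros n. rewrite coef_i. fold p q. ring. }
  assert (Hc1 : forall c, (Rabs c <= /2)%R -> (0 < 1 + - c)%R).
  { intros c Hc. unfold Rabs in Hc. destruct (Rcase_abs c); lra. }
  assert (DGr : forall c, (Rabs (c - 0) <= /2)%R -> is_derive Gr c 0%R).
  { intros c Hc. rewrite Rminus_0_r in Hc. unfold Gr, Fr, Fi. auto_derive.
    - repeat split; try apply Hc1; auto; apply ex_derive_PSeries; auto.
    - assert (D1 : Derive (fun x0 => PSeries (ar al) x0) c = PSeries (PS_derive (ar al)) c) by (apply Derive_PSeries; auto).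
      assert (D2 : Derive (fun x0 => PSeries (ai al) x0) c = PSeries (PS_derive (ai al)) c) by (apply Derive_PSeries; auto).
      rewrite D1, D2.
      specialize (Or c Hc). specialize (Oi c Hc). fold Fr Fi in Or, Oi |- *.
      pose proof (Hc1 c Hc) as H1.
      set (u := (/ (1 + - c))%R).
      assert (Hu : ((1 + - c) * u = 1)%R) by (unfold u; field; lra).
      assert (E1 : PSeries (PS_derive (ar al)) c = (u * (p * Fr c + - q * Fi c))%R).
      { rewrite <- Or. replace (1 - c)%R with (1 + - c)%R by ring.
        transitivity (((1 + - c) * u) * PSeries (PS_derive (ar al)) c)%R; [rewrite Hu; ring| ring]. }
      assert (E2 : PSeries (PS_derive (ai al)) c = (u * (p * Fi c + q * Fr c))%R).
      { rewrite <- Oi. replace (1 - c)%R with (1 + - c)%R by ring.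
        transitivity (((1 + - c) * u) * PSeries (PS_derive (ai al)) c)%R; [rewrite Hu; ring| ring]. }
      rewrite E1, E2. fold u. ring. }
  assert (DGi : forall c, (Rabs (c - 0) <= /2)%R -> is_derive Gi c 0%R).
  { intros c Hc. rewrite Rminus_0_r in Hc. unfold Gi, Fr, Fi. auto_derive.
    - repeat split; try apply Hc1; auto; apply ex_derive_PSeries; auto.
    - assert (D1 : Derive (fun x0 => PSeries (ar al) x0) c = PSeries (PS_derive (ar al)) c) by (apply Derive_PSeries; auto).
      assert (D2 : Derive (fun x0 => PSeries (ai al) x0) c = PSeries (PS_derive (ai al)) c) by (apply Derive_PSeries; auto).
      rewrite D1, D2.
      specialize (Or c Hc). specialize (Oi c Hc). fold Fr Fi in Or, Oi |- *.
      pose proof (Hc1 c Hc) as H1.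
      set (u := (/ (1 + - c))%R).
      assert (Hu : ((1 + - c) * u = 1)%R) by (unfold u; field; lra).
      assert (E1 : PSeries (PS_derive (ar al)) c = (u * (p * Fr c + - q * Fi c))%R).
      { rewrite <- Or. replace (1 - c)%R with (1 + - c)%R by ring.
        transitivity (((1 + - c) * u) * PSeries (PS_derive (ar al)) c)%R; [rewrite Hu; ring| ring]. }
      assert (E2 : PSeries (PS_derive (ai al)) c = (u * (p * Fi c + q * Fr c))%R).
      { rewrite <- Oi. replace (1 - c)%R with (1 + - c)%R by ring.
        transitivity (((1 + - c) * u) * PSeries (PS_derive (ai al)) c)%R; [rewrite Hu; ring| ring]. }
      rewrite E1, E2. fold u. ring. }
  assert (Hhalf : (Rabs (/2 - 0) <= /2)%R) by (rewrite Rminus_0_r, Rabs_right; lra).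
  destruct (MVT_cor4 Gr (fun _ => 0%R) 0%R (/2)%R DGr (/2)%R Hhalf) as [c1 [Hr1 _]].
  destruct (MVT_cor4 Gi (fun _ => 0%R) 0%R (/2)%R DGi (/2)%R Hhalf) as [c2 [Hi1 _]].
  assert (G0r : Gr 0%R = 1%R).
  { unfold Gr, Fr, Fi. rewrite Rminus_0_r, ln_1, !Rmult_0_r, exp_0, cos_0, sin_0, !PSeries_0.
    unfold ar, ai. rewrite Af_0. simpl. ring. }
  assert (G0i : Gi 0%R = 0%R).
  { unfold Gi, Fr, Fi. rewrite Rminus_0_r, ln_1, !Rmult_0_r, exp_0, cos_0, sin_0, !PSeries_0.
    unfold ar, ai. rewrite Af_0. simpl. ring. }
  assert (Gh : Gr (/2)%R = 1%R /\ Gi (/2)%R = 0%R) by lra.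
  set (F := (Fr (/2)%R, Fi (/2)%R) : C).
  assert (HEF : Cexp (- (al * RtoC (ln 2))) * F = 1).
  { destruct Gh as [Gh1 Gh2]. unfold Gr, Gi in Gh1, Gh2.
    replace (1 - / 2)%R with (/ 2)%R in Gh1, Gh2 by field.
    rewrite ln_Rinv in Gh1, Gh2 by lra.
    unfold Cexp, F. apply injective_projections; simpl.
    - etransitivity; [|apply Gh1]. unfold p, q, Re, Im. simpl.
      replace (- (fst al * ln 2 - snd al * 0))%R with (fst al * - ln 2)%R by ring.
      replace (- (fst al * 0 + snd al * ln 2))%R with (snd al * - ln 2)%R by ring. ring.
    - etransitivity; [|apply Gh2]. unfold p, q, Re, Im. simpl.
      replace (- (fst al * ln 2 - snd al * 0))%R with (fst al * - ln 2)%R by ring.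
      replace (- (fst al * 0 + snd al * ln 2))%R with (snd al * - ln 2)%R by ring. ring. }
  assert (HF : F = Rcpow 2 al).
  { unfold Rcpow. transitivity (Cexp (al * RtoC (ln 2)) * (Cexp (- (al * RtoC (ln 2))) * F)).
    - rewrite Cmult_assoc, <- Cexp_add. replace (al * RtoC (ln 2) + - (al * RtoC (ln 2))) with (RtoC 0) by ring.
      rewrite Cexp_0. ring.
    - rewrite HEF. ring. }
  rewrite <- HF. split.
  - apply is_lim_seq_ext with (u := fun N => sum_f_R0 (fun n => (ar al n * (/2) ^ n)%R) N).
    { intros N. rewrite Re_Csum. apply sum_eq. intros n _. rewrite half_pow, re_scal_r. reflexivity. }
    apply (pseries_lim (ar al)). apply CV_radius_inside. apply Rr. rewrite Rabs_right; lra.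
  - apply is_lim_seq_ext with (u := fun N => sum_f_R0 (fun n => (ai al n * (/2) ^ n)%R) N).
    { intros N. rewrite Im_Csum. apply sum_eq. intros n _. rewrite half_pow, im_scal_r. reflexivity. }
    apply (pseries_lim (ai al)). apply CV_radius_inside. apply Ri. rewrite Rabs_right; lra.
Qed.


Lemma vand_weighted : forall N a b,
  (a + b) * Csum (fun m => RtoC (INR (N - m)) * (Af m a * Af (N - m) b)) N
  = b * (RtoC (INR N) * Af N (a + b)).
Proof.
  intros N a b. destruct N as [|N].
  - simpl. change (INR 0) with 0%R. ring.
  - rewrite Csum_S. replace (S N - S N)%nat with O by lia. change (INR 0) with 0%R.
    rewrite Cmult_0_l, Cplus_0_r.
    rewrite (Csum_ext_le _ (fun m => b * (Af m a * Af (N - m) (b + 1)))).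
    2:{ intros m Hm. replace (S N - m)%nat with (S (N - m)) by lia.
        replace (RtoC (INR (S (N - m))) * (Af m a * Af (S (N - m)) b)) with (Af m a * (RtoC (INR (S (N - m))) * Af (S (N - m)) b)) by ring.
        rewrite Af_S. ring. }
    rewrite Csum_scal, vandermonde, Af_S.
    replace (a + (b + 1)) with (a + b + 1) by ring. ring.
Qed.

Definition Tt (al be a b : C) (m n : nat) : C :=
  poch al (m + n) / poch be (m + n) * (/ 2) ^ (m + n) * (Af m a * Af n b) * (1 + 2 * RtoC (INR n) / al).

Lemma kdf_term_eq : forall al be a b m n, ~ nonpos_int be -> ~ nonpos_int (al / 2) ->
  kdf_term [al] [a] [b; al / 2 + 1] [be] [] [al / 2] (/ 2) (/ 2) m n = Tt al be a b m n.
Proof.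
  intros al be a b m n Hbe Hal.
  unfold kdf_term, Tt, poch_list, Af. simpl fold_right.
  assert (Hal0 : al / 2 <> 0) by (intros H; apply Hal; exists O; rewrite H; simpl; ring).
  assert (Hal1 : al <> 0) by (intros H; apply Hal0; rewrite H; field).
  assert (E : poch (al / 2 + 1) n * (al / 2) = poch (al / 2) n * (al / 2 + RtoC (INR n))).
  { rewrite Cmult_comm, <- poch_S_left. reflexivity. }
  assert (Hp1 := poch_neq0 be (m + n) Hbe). assert (Hp2 := poch_neq0 (al / 2) n Hal).
  pose proof (fact_neq0C m). pose proof (fact_neq0C n).
  replace (poch (al / 2 + 1) n) with (poch (al / 2) n * (al / 2 + RtoC (INR n)) / (al / 2)).
  2:{ rewrite <- E. field. auto. }
  rewrite Cpow_add_r. field. repeat split; auto.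
Qed.

Lemma diag_eq : forall al be a b N, a + b = be -> ~ nonpos_int be -> ~ nonpos_int (al / 2) ->
  Csum (fun m => Tt al be a b m (N - m)%nat) N
  = Af N al * (/ 2) ^ N + (2 * b / (al * be)) * (RtoC (INR N) * Af N al * (/ 2) ^ N).
Proof.
  intros al be a b N Hab Hbe Hal.
  assert (Hal0 : al / 2 <> 0) by (intros H; apply Hal; exists O; rewrite H; simpl; ring).
  assert (Hal1 : al <> 0) by (intros H; apply Hal0; rewrite H; field).
  assert (Hbe0 : be <> 0) by (intros H; apply Hbe; exists O; rewrite H; simpl; ring).
  assert (Hp := poch_neq0 be N Hbe). pose proof (fact_neq0C N).
  set (K := poch al N / poch be N * (/ 2) ^ N).
  rewrite (Csum_ext_le _ (fun m => K * (Af m a * Af (N - m) b) + K * (2 / al) * (RtoC (INR (N - m)) * (Af m a * Af (N - m) b)))).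
  2:{ intros m Hm. unfold Tt, K. replace (m + (N - m))%nat with N by lia. field. auto. }
  rewrite Csum_plus, !Csum_scal, vandermonde, Hab.
  assert (HW := vand_weighted N a b). rewrite Hab in HW.
  set (W := Csum (fun m => RtoC (INR (N - m)) * (Af m a * Af (N - m) b)) N) in *.
  assert (HW' : W = b * (RtoC (INR N) * Af N be) / be) by (rewrite <- HW; field; auto).
  rewrite HW'. unfold K, Af.
  field. repeat split; auto.
Qed.

Lemma Rcpow_2_S : forall al, Rcpow 2 (al + 1) = Rcpow 2 al * 2.
Proof.
  intros al. rewrite Rcpow_add. change (RtoC 1) with (RtoC (INR 1)).
  rewrite Rcpow_nat by lra. simpl. rewrite Rmult_1_r. reflexivity.
Qed.

Lemma weighted_half : forall al,
  Cis_lim_seq (fun M => Csum (fun N => RtoC (INR N) * Af N al * (/ 2) ^ N) M) (al * Rcpow 2 al).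
Proof.
  intros al. apply Cis_lim_seq_incr_1.
  apply Cis_lim_seq_ext with (u := fun M => al / 2 * Csum (fun N => Af N (al + 1) * (/ 2) ^ N) M).
  - intros M. rewrite Csum_shift. change (INR 0) with 0%R. rewrite !Cmult_0_l, Cplus_0_l.
    rewrite <- Csum_scal. apply Csum_ext_le. intros N _.
    rewrite Af_S. change ((/ 2) ^ S N) with (/ 2 * (/ 2) ^ N). field.
  - replace (al * Rcpow 2 al) with (al / 2 * Rcpow 2 (al + 1)) by (rewrite Rcpow_2_S; field).
    apply Cis_lim_seq_scal. apply binom_half.
Qed.

Lemma diag_lim : forall al be a b, a + b = be -> ~ nonpos_int be -> ~ nonpos_int (al / 2) ->
  Cis_lim_seq (fun M => Csum (fun N => Csum (fun m => Tt al be a b m (N - m)%nat) N) M)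
    (Rcpow 2 al * (1 + 2 * b / be)).
Proof.
  intros al be a b Hab Hbe Hal.
  assert (Hal0 : al / 2 <> 0) by (intros H; apply Hal; exists O; rewrite H; simpl; ring).
  assert (Hal1 : al <> 0) by (intros H; apply Hal0; rewrite H; field).
  assert (Hbe0 : be <> 0) by (intros H; apply Hbe; exists O; rewrite H; simpl; ring).
  apply Cis_lim_seq_ext with (u := fun M => Csum (fun N => Af N al * (/ 2) ^ N) M
      + (2 * b / (al * be)) * Csum (fun N => RtoC (INR N) * Af N al * (/ 2) ^ N) M).
  - intros M. rewrite <- Csum_scal, <- Csum_plus. apply Csum_ext_le. intros N _.
    rewrite diag_eq; auto.
  - replace (Rcpow 2 al * (1 + 2 * b / be)) with (Rcpow 2 al + 2 * b / (al * be) * (al * Rcpow 2 al))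
      by (field; auto).
    apply Cis_lim_seq_plus; [apply binom_half|]. apply Cis_lim_seq_scal. apply weighted_half.
Qed.

Lemma Af_RtoC : forall c n, Af n (RtoC c) = RtoC (rpoch c n / INR (fact n)).
Proof. intros c n. unfold Af. rewrite poch_RtoC, RtoC_div by apply INR_fact_neq_0. reflexivity. Qed.

Lemma vandermonde_R : forall c d N,
  sum_f_R0 (fun m => (rpoch c m / INR (fact m) * (rpoch d (N - m) / INR (fact (N - m))))%R) N
  = (rpoch (c + d) N / INR (fact N))%R.
Proof.
  intros c d N. apply RtoC_inj. rewrite <- Csum_RtoC.
  rewrite <- Af_RtoC, RtoC_plus, <- vandermonde. apply Csum_ext_le. intros m _.
  rewrite RtoC_mult, !Af_RtoC. reflexivity.
Qed.

Lemma Cmod_half_pow : forall k, Cmod ((/ 2) ^ k) = ((/ 2) ^ k)%R.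
Proof. intros k. rewrite half_pow, Cmod_R, Rabs_right; [reflexivity| apply Rle_ge, pow_le; lra]. Qed.

Definition Xs (al be : C) (N : nat) : R := (Cmod (poch al N / poch be N) * (/ 2) ^ N)%R.
Definition Ys (al : C) (N : nat) : R := (1 + 2 * INR N / Cmod al)%R.
Definition Rs (s : R) (N : nat) : R := (rpoch s N / INR (fact N))%R.

Lemma Tt_bound : forall (al be a b : C) m n, ~ nonpos_int be -> al <> 0 ->
  (Cmod (Tt al be a b m n) <= Xs al be (m + n) * Ys al (m + n) * (Rs (Cmod a) m * Rs (Cmod b) n))%R.
Proof.
  intros al be a b m n Hbe Hal.
  unfold Tt, Xs, Ys, Rs. rewrite !Cmod_mult, Cmod_half_pow.
  assert (Hal' : (0 < Cmod al)%R) by (apply Cmod_gt_0; auto).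
  assert (H1 : (Cmod (1 + 2 * RtoC (INR n) / al) <= 1 + 2 * INR (m + n) / Cmod al)%R).
  { eapply Rle_trans; [apply Cmod_triangle|]. rewrite Cmod_1, Cmod_div by auto.
    rewrite Cmod_mult, Cmod_R, Cmod_R, Rabs_right, Rabs_right by (try apply Rle_ge, pos_INR; lra).
    assert (INR n <= INR (m + n))%R by (apply le_INR; lia).
    apply Rplus_le_compat_l. unfold Rdiv. apply Rmult_le_compat_r; [left; apply Rinv_0_lt_compat; auto| lra]. }
  pose proof (Cmod_Af a m). pose proof (Cmod_Af b n).
  pose proof (Cmod_ge_0 (poch al (m + n) / poch be (m + n))).
  assert (0 <= (/ 2) ^ (m + n))%R by (apply pow_le; lra).
  pose proof (Cmod_ge_0 (Af m a)). pose proof (Cmod_ge_0 (Af n b)).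
  pose proof (Cmod_ge_0 (1 + 2 * RtoC (INR n) / al)).
  set (X := (Cmod (poch al (m + n) / poch be (m + n)) * (/ 2) ^ (m + n))%R).
  assert (HX : (0 <= X)%R) by (unfold X; apply Rmult_le_pos; auto).
  apply Rle_trans with (X * (rpoch (Cmod a) m / INR (fact m) * (rpoch (Cmod b) n / INR (fact n))) * (1 + 2 * INR (m + n) / Cmod al))%R.
  2:{ right; ring. }
  apply Rmult_le_compat.
  - apply Rmult_le_pos; [exact HX| apply Rmult_le_pos; assumption].
  - exact H6.
  - apply Rmult_le_compat_l; [exact HX|]. apply Rmult_le_compat; assumption.
  - exact H1.
Qed.

Lemma Xs_S : forall al be N, ~ nonpos_int be ->
  Xs al be (S N) = (Xs al be N * (Cmod (al + RtoC (INR N)) / Cmod (be + RtoC (INR N)) * / 2))%R.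
Proof.
  intros al be N Hbe. unfold Xs.
  assert (Hq : be + RtoC (INR N) <> 0).
  { intros H. apply Hbe. exists N. replace be with (be + RtoC (INR N) - RtoC (INR N)) by ring. rewrite H. ring. }
  assert (Hp := poch_neq0 be N Hbe).
  change (poch al (S N)) with (poch al N * (al + RtoC (INR N))).
  change (poch be (S N)) with (poch be N * (be + RtoC (INR N))).
  replace (poch al N * (al + RtoC (INR N)) / (poch be N * (be + RtoC (INR N))))
    with ((poch al N / poch be N) * ((al + RtoC (INR N)) / (be + RtoC (INR N)))) by (field; auto).
  rewrite Cmod_mult, (Cmod_div (al + RtoC (INR N))) by auto. simpl pow. ring.
Qed.

Lemma Ys_pos : forall (al : C) N, al <> 0 -> (1 <= Ys al N)%R.
Proof.
  intros al N Hal. unfold Ys. assert (0 < Cmod al)%R by (apply Cmod_gt_0; auto).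
  pose proof (pos_INR N). assert (0 <= 2 * INR N / Cmod al)%R by (apply Rmult_le_pos; [lra| left; apply Rinv_0_lt_compat; auto]). lra.
Qed.

Lemma Ys_S : forall (al : C) N, al <> 0 -> (8 <= INR N)%R -> (Ys al (S N) <= 9/8 * Ys al N)%R.
Proof.
  intros al N Hal HN. unfold Ys. rewrite S_INR.
  assert (HA : (0 < Cmod al)%R) by (apply Cmod_gt_0; auto).
  apply Rmult_le_reg_r with (Cmod al); auto. field_simplify; try lra.

Qed.

Lemma Rs_nonneg : forall s N, (0 <= s)%R -> (0 <= Rs s N)%R.
Proof.
  intros s N Hs. unfold Rs. apply Rmult_le_pos; [apply rpoch_nonneg; auto| left; apply Rinv_0_lt_compat, lt_0_INR, lt_O_fact].
Qed.

Lemma Xs_nonneg : forall al be N, (0 <= Xs al be N)%R.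
Proof. intros. unfold Xs. apply Rmult_le_pos; [apply Cmod_ge_0| apply pow_le; lra]. Qed.

Lemma prod3_le : forall x y z c, (0 <= x <= c)%R -> (0 <= y <= c)%R -> (0 <= z <= c)%R -> (x * y * z <= c * c * c)%R.
Proof.
  intros x y z c Hx Hy Hz. apply Rmult_le_compat; try lra.
  - apply Rmult_le_pos; lra.
  - apply Rmult_le_compat; lra.
Qed.

Lemma P_series : forall (al be : C) (s : R), al <> 0 -> ~ nonpos_int be -> (0 <= s)%R ->
  ex_series (fun N => (Xs al be N * Ys al N * Rs s N)%R).
Proof.
  intros al be s Hal Hbe Hs.
  destruct (INR_unbounded (8 * Cmod al + 9 * Cmod be + 8 * s + 8)) as [N0 HN0].
  pose proof (Cmod_ge_0 al). pose proof (Cmod_ge_0 be).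
  apply (ratio_series _ (3/4) N0); [lra| |].
  { intros N. apply Rmult_le_pos; [apply Rmult_le_pos|]; [apply Xs_nonneg| pose proof (Ys_pos al N Hal); lra| apply Rs_nonneg; auto]. }
  intros N HN. assert (HNN : (INR N0 <= INR N)%R) by (apply le_INR; auto).
  rewrite Xs_S by auto. unfold Rs at 1. rewrite rpoch_S_ratio by auto. fold (Rs s N).
  set (r1 := (Cmod (al + RtoC (INR N)) / Cmod (be + RtoC (INR N)))%R).
  set (r2 := ((s + INR N) / INR (S N))%R).
  set (rho := (Ys al (S N) / Ys al N)%R).
  pose proof (Ys_pos al N Hal) as HY. pose proof (Ys_pos al (S N) Hal) as HY'.
  assert (HYS : Ys al (S N) = (Ys al N * rho)%R) by (unfold rho; field; lra).
  rewrite HYS.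
  assert (Hb1 : (0 <= r1 <= 9/8)%R).
  { unfold r1. assert (Hn1 : (Cmod (al + RtoC (INR N)) <= Cmod al + INR N)%R).
    { eapply Rle_trans; [apply Cmod_triangle|]. rewrite Cmod_R, Rabs_right by (apply Rle_ge, pos_INR). lra. }
    assert (Hn2 : (INR N - Cmod be <= Cmod (be + RtoC (INR N)))%R).
    { assert (Ht := Cmod_triangle (be + RtoC (INR N)) (- be)).
      replace (be + RtoC (INR N) + - be) with (RtoC (INR N)) in Ht by ring.
      rewrite Cmod_R, Rabs_right, Cmod_opp in Ht by (apply Rle_ge, pos_INR). lra. }
    assert (Hpos : (0 < Cmod (be + RtoC (INR N)))%R) by lra.
    split. apply Rmult_le_pos; [apply Cmod_ge_0| left; apply Rinv_0_lt_compat; auto].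
    apply Rmult_le_reg_r with (Cmod (be + RtoC (INR N))); auto.
    unfold Rdiv. rewrite Rmult_assoc, Rinv_l by lra. lra. }
  assert (Hb2 : (0 <= r2 <= 9/8)%R).
  { unfold r2. rewrite S_INR. pose proof (pos_INR N). split.
    apply Rmult_le_pos; [lra| left; apply Rinv_0_lt_compat; lra].
    apply Rmult_le_reg_r with (INR N + 1)%R; [lra|].
    unfold Rdiv. rewrite Rmult_assoc, Rinv_l by lra. lra. }
  assert (Hb3 : (0 <= rho <= 9/8)%R).
  { unfold rho. split. apply Rmult_le_pos; [lra| left; apply Rinv_0_lt_compat; lra].
    apply Rmult_le_reg_r with (Ys al N); [lra|].
    unfold Rdiv. rewrite Rmult_assoc, Rinv_l by lra. rewrite Rmult_1_r.
    apply Ys_S; auto. lra. }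
  assert (H3 := prod3_le r1 r2 rho (9/8) Hb1 Hb2 Hb3).
  set (P := (Xs al be N * Ys al N * Rs s N)%R).
  assert (HP : (0 <= P)%R) by (unfold P; apply Rmult_le_pos; [apply Rmult_le_pos|]; [apply Xs_nonneg| lra| apply Rs_nonneg; auto]).
  replace (Xs al be N * (r1 * / 2) * (Ys al N * rho) * (Rs s N * r2))%R with (P * (r1 * r2 * rho) / 2)%R by (unfold P; field).
  apply Rle_trans with (P * (9/8 * (9/8) * (9/8)) / 2)%R.
  - unfold Rdiv. apply Rmult_le_compat_r; [lra|]. apply Rmult_le_compat_l; auto.
  - lra.
Qed.

Lemma abs_diag : forall (al be a b : C), al <> 0 -> ~ nonpos_int be ->
  ex_series (fun N => sum_f_R0 (fun m => Cmod (Tt al be a b m (N - m)%nat)) N).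
Proof.
  intros al be a b Hal Hbe.
  apply (@ex_series_le R_AbsRing R_CompleteNormedModule _ (fun N => (Xs al be N * Ys al N * Rs (Cmod a + Cmod b) N)%R)).
  - intros N. change (norm (sum_f_R0 (fun m => Cmod (Tt al be a b m (N - m)%nat)) N))
      with (Rabs (sum_f_R0 (fun m => Cmod (Tt al be a b m (N - m)%nat)) N)).
    rewrite Rabs_right by (apply Rle_ge, sum_f_R0_nonneg; intros; apply Cmod_ge_0).
    eapply Rle_trans.
    { apply sum_Rle with (Bn := fun m => (Rs (Cmod a) m * Rs (Cmod b) (N - m) * (Xs al be N * Ys al N))%R).
      intros m Hm. eapply Rle_trans; [apply Tt_bound; auto|].
      replace (m + (N - m))%nat with N by lia. right; ring. }
    rewrite <- scal_sum. unfold Rs. rewrite vandermonde_R. right. ring.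
  - apply P_series; auto. pose proof (Cmod_ge_0 a); pose proof (Cmod_ge_0 b); lra.
Qed.

Lemma kdf_main : forall (al be a b : C), a + b = be -> ~ nonpos_int be -> ~ nonpos_int (al / 2) ->
  Cis_lim_seq (kdf_partial [al] [a] [b; al / 2 + 1] [be] [] [al / 2] (/ 2) (/ 2))
    (Rcpow 2 al * (1 + 2 * b / be)).
Proof.
  intros al be a b Hab Hbe Hal.
  assert (Hal0 : al / 2 <> 0) by (intros H; apply Hal; exists O; rewrite H; simpl; ring).
  assert (Hal1 : al <> 0) by (intros H; apply Hal0; rewrite H; field).
  apply Cis_lim_seq_ext with (u := fun M => Csum (fun m => Csum (fun n => Tt al be a b m n) M) M).
  { intros M. unfold kdf_partial. apply Csum_ext_le. intros m _. apply Csum_ext_le. intros n _.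
    symmetry. apply kdf_term_eq; auto. }
  destruct (abs_diag al be a b Hal1 Hbe) as [LA HLA].
  apply (sq_tri _ LA); auto.
  apply diag_lim; auto.
Qed.


Lemma Rcpow2_shift : forall al k, Rcpow 2 (al + RtoC (INR k)) = Rcpow 2 al * RtoC (2 ^ k).
Proof. intros. rewrite Rcpow_add, Rcpow_nat by lra. reflexivity. Qed.

Lemma sign_sq : forall i, RtoC ((-1) ^ i) * RtoC ((-1) ^ i) = 1.
Proof.
  intros i. rewrite <- RtoC_mult, <- Rpow_mult_distr.
  replace (-1 * -1)%R with 1%R by ring. rewrite pow1. reflexivity.
Qed.

Lemma RtoC_neq0 : forall x : R, x <> 0%R -> RtoC x <> 0.
Proof. intros x Hx H. apply Hx. apply RtoC_inj in H. exact H. Qed.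

Lemma part1_rhs : forall i (al be : C),
  (forall r : nat, (r <= i)%nat ->
      ~ nonpos_int (be / 4 - RtoC (INR i) + (RtoC (INR r) - 1) / 2)) ->
  be <> 0 ->
  RtoC ((-1) ^ i) * Rcpow 2 (al + 3 + RtoC (INR i))
        / (be * RtoC (INR (fact (i + 1))))
      * Csum (fun r => RtoC ((-1) ^ r * binomR i r)
             * (CGamma (be / 4 + RtoC (INR (r + 1)) / 2)
                / CGamma (be / 4 - RtoC (INR i) + (RtoC (INR r) - 1) / 2))) i
  = Rcpow 2 al * (1 + 2 * (be / 2 - 2 - RtoC (INR i)) / be).
Proof.
  intros i al be H Hbe.
  set (x := be / 4 - RtoC (INR i) - / 2).
  rewrite (Csum_ext_le _ (fun r => RtoC ((-1) ^ r * binomR i r) * poch (x + RtoC (INR r) / 2) (S i))).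
  2:{ intros r Hr. f_equal.
      assert (Ew : be / 4 + RtoC (INR (r + 1)) / 2 = (be / 4 - RtoC (INR i) + (RtoC (INR r) - 1) / 2) + RtoC (INR (S i))).
      { rewrite plus_INR, (S_INR i), !RtoC_plus. change (INR 1) with 1%R. field. }
      rewrite Ew.
      rewrite Gamma_ratio by (apply H; auto). f_equal. unfold x. field. }
  change (Csum (fun r => RtoC ((-1) ^ r * binomR i r) * poch (x + RtoC (INR r) / 2) (S i)) i) with (Bsum i (S i) x).
  rewrite B_next. unfold bcoef.
  replace (al + 3 + RtoC (INR i)) with (al + RtoC (INR (3 + i))) by (rewrite plus_INR, RtoC_plus; replace (INR 3) with 3%R by (simpl; ring); ring).
  rewrite Rcpow2_shift.
  replace (i + 1)%nat with (S i) by lia.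
  change (fact (S i)) with (S i * fact i)%nat.
  rewrite mult_INR, S_INR, pow_add.
  rewrite !RtoC_mult, RtoC_div by (apply pow_nonzero; lra).
  rewrite RtoC_mult, RtoC_plus.
  set (s := RtoC ((-1) ^ i)). set (f := RtoC (INR (fact i))). set (t := RtoC (2 ^ i)). set (n := RtoC (INR i)).
  assert (Hf : f <> 0) by apply fact_neq0C.
  assert (Ht : t <> 0) by (apply RtoC_neq0, pow_nonzero; lra).
  assert (Hn : n + RtoC 1 <> 0) by (unfold n; rewrite <- RtoC_plus; apply RtoC_neq0; pose proof (pos_INR i); lra).
  assert (Hss := sign_sq i). fold s in Hss.
  replace (RtoC (2 ^ 3)) with (RtoC 8) by (f_equal; simpl; ring).
  unfold x. fold n.
  transitivity ((s * s) * (Rcpow 2 al * RtoC 8 * t / (be * ((n + RtoC 1) * f)) *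
       (f / t * ((n + 1) * (be / 4 - n - / 2) + 3 * n * (n + 1) / 4)))).
  { field. repeat split; auto. }
  rewrite Hss. field. repeat split; auto.
Qed.

Lemma part2_rhs : forall i (al be : C),
  (forall r : nat, (r <= i)%nat -> ~ nonpos_int (be / 4 + (RtoC (INR r) - 1) / 2)) ->
  be <> 0 ->
  Rcpow 2 (al + 3 - RtoC (INR i)) / be
      * Csum (fun r => RtoC (binomR i r)
             * (CGamma (be / 4 + RtoC (INR (r + 1)) / 2)
                / CGamma (be / 4 + (RtoC (INR r) - 1) / 2))) i
  = Rcpow 2 al * (1 + 2 * (be / 2 - 2 + RtoC (INR i)) / be).
Proof.
  intros i al be H Hbe.
  rewrite (Csum_ext_le _ (fun r => RtoC (binomR i r) * ((be / 4 - / 2) + / 2 * RtoC (INR r)))).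
  2:{ intros r Hr. f_equal.
      assert (Ew : be / 4 + RtoC (INR (r + 1)) / 2 = (be / 4 + (RtoC (INR r) - 1) / 2) + RtoC (INR 1)).
      { rewrite plus_INR, !RtoC_plus. change (INR 1) with 1%R. field. }
      rewrite Ew, Gamma_ratio by (apply H; auto). simpl poch. change (INR 0) with 0%R. field. }
  rewrite binom_lin_sum.
  assert (E : Rcpow 2 (al + 3 - RtoC (INR i)) * RtoC (2 ^ i) = Rcpow 2 al * 8).
  { rewrite <- Rcpow2_shift. replace (al + 3 - RtoC (INR i) + RtoC (INR i)) with (al + RtoC (INR 3)).
    - rewrite Rcpow2_shift. f_equal. f_equal. simpl; ring.
    - replace (INR 3) with 3%R by (simpl; ring). ring. }
  assert (Ht : RtoC (2 ^ i) <> 0) by (apply RtoC_neq0, pow_nonzero; lra).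
  replace (Rcpow 2 (al + 3 - RtoC (INR i))) with (Rcpow 2 al * 8 / RtoC (2 ^ i)) by (rewrite <- E; field; auto).
  field. split; auto.
Qed.

Theorem theorem4 (i : nat) (alpha beta : C) :
  ~ nonpos_int beta ->
  ~ nonpos_int (alpha / 2) ->
  ((forall r : nat, (r <= i)%nat ->
      ~ nonpos_int (beta / 4 + RtoC (INR (r + 1)) / 2) /\
      ~ nonpos_int (beta / 4 - RtoC (INR i) + (RtoC (INR r) - 1) / 2)) ->
   Cis_lim_seq
     (kdf_partial [alpha] [beta / 2 + 2 + RtoC (INR i)]
        [beta / 2 - 2 - RtoC (INR i); alpha / 2 + 1]
        [beta] [] [alpha / 2] (/ 2) (/ 2))
     (RtoC ((-1) ^ i) * Rcpow 2 (alpha + 3 + RtoC (INR i))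
        / (beta * RtoC (INR (fact (i + 1))))
      * Csum (fun r => RtoC ((-1) ^ r * binomR i r)
             * (CGamma (beta / 4 + RtoC (INR (r + 1)) / 2)
                / CGamma (beta / 4 - RtoC (INR i) + (RtoC (INR r) - 1) / 2))) i))
  /\
  ((forall r : nat, (r <= i)%nat ->
      ~ nonpos_int (beta / 4 + RtoC (INR (r + 1)) / 2) /\
      ~ nonpos_int (beta / 4 + (RtoC (INR r) - 1) / 2)) ->
   Cis_lim_seq
     (kdf_partial [alpha] [beta / 2 + 2 - RtoC (INR i)]
        [beta / 2 - 2 + RtoC (INR i); alpha / 2 + 1]
        [beta] [] [alpha / 2] (/ 2) (/ 2))
     (Rcpow 2 (alpha + 3 - RtoC (INR i)) / beta
      * Csum (fun r => RtoC (binomR i r)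
             * (CGamma (beta / 4 + RtoC (INR (r + 1)) / 2)
                / CGamma (beta / 4 + (RtoC (INR r) - 1) / 2))) i)).
Proof.
  intros Hbe Hal.
  assert (Hbe0 : beta <> 0) by (intros H; apply Hbe; exists O; rewrite H; simpl; ring).
  split.
  - intros H. rewrite part1_rhs; auto.
    + apply kdf_main; auto. field.
    + intros r Hr. apply (H r Hr).
  - intros H. rewrite part2_rhs; auto.
    + apply kdf_main; auto. field.
    + intros r Hr. apply (H r Hr).
Qed.
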